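(* In the sequent calculus $\mathsf{S.ConstCKCEM}$, the rules $\mathsf{w_L}$ (from $\Gamma\Rightarrow\Delta$ infer $\Gamma,\varphi\Rightarrow\Delta$), $\mathsf{w_R}$ (from $\Gamma\Rightarrow$ infer $\Gamma\Rightarrow\varphi$) and $\mathsf{c}$ (from $\Gamma,\varphi,\varphi\Rightarrow\Delta$ infer $\Gamma,\varphi\Rightarrow\Delta$) are height-preserving admissible, and $\mathsf{cut}$ (from $\Gamma\Rightarrow\varphi$ and $\Gamma',\varphi\Rightarrow\Delta$ infer $\Gamma,\Gamma'\Rightarrow\Delta$) is admissible. Moreover, a sequent $\Gamma\Rightarrow\Delta$ is derivable in $\mathsf{S.ConstCKCEM}$ if and only if $\iota(\Gamma\Rightarrow\Delta)$ is derivable in $\mathsf{ConstCKCEM}$.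
   Context: Language $\mathcal{L}$: formulas $\varphi ::= p \mid \bot \mid \varphi\wedge\varphi \mid \varphi\vee\varphi \mid \varphi\to\varphi \mid \varphi \mathrel{\Box\!\!\to} \varphi \mid \varphi \mathrel{\Diamond\!\!\to}\varphi$; $\neg\varphi:=\varphi\to\bot$, $\top:=\neg\bot$, $\varphi\leftrightarrow\psi:=(\varphi\to\psi)\wedge(\psi\to\varphi)$. $\mathsf{ConstCK}$: any axiomatisation of intuitionistic propositional logic in $\mathcal{L}$ with modus ponens, plus CM$_\Box$: $(\varphi\mathrel{\Box\!\!\to}\psi\wedge\chi)\to(\varphi\mathrel{\Box\!\!\to}\psi)\wedge(\varphi\mathrel{\Box\!\!\to}\chi)$; CC$_\Box$: $(\varphi\mathrel{\Box\!\!\to}\psi)\wedge(\varphi\mathrel{\Box\!\!\to}\chi)\to(\varphi\mathrel{\Box\!\!\to}\psi\wedge\chi)$; CN$_\Box$: $\varphi\mathrel{\Box\!\!\to}\top$; CN$_\Diamond$: $\neg(\varphi\mathrel{\Diamond\!\!\to}\bot)$; CK$_\Diamond$: $(\varphi\mathrel{\Box\!\!\to}(\psi\to\chi))\to((\varphi\mathrel{\Diamond\!\!\to}\psi)\to(\varphi\mathrel{\Diamond\!\!\to}\chi))$; rules RA$_\Box$: from $\varphi\leftrightarrow\rho$ infer $(\varphi\mathrel{\Box\!\!\to}\psi)\leftrightarrow(\rho\mathrel{\Box\!\!\to}\psi)$; RC$_\Box$: from $\psi\leftrightarrow\chi$ infer $(\varphi\mathrel{\Box\!\!\to}\psi)\leftrightarrow(\varphi\mathrel{\Box\!\!\to}\chi)$;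 RA$_\Diamond$, RC$_\Diamond$: same with $\mathrel{\Diamond\!\!\to}$. $\mathsf{ConstCKCEM}$ = $\mathsf{ConstCK}$ + CEM$_\Diamond$: $(\varphi\mathrel{\Diamond\!\!\to}\psi)\wedge(\varphi\mathrel{\Diamond\!\!\to}\chi)\to(\varphi\mathrel{\Diamond\!\!\to}\psi\wedge\chi)$. A sequent $\Gamma\Rightarrow\Delta$ is a pair of finite multisets with $|\Delta|\le1$; $\varphi\Leftrightarrow\rho$ abbreviates $\varphi\Rightarrow\rho$ and $\rho\Rightarrow\varphi$. $\iota(\Gamma\Rightarrow\Delta)=\bigwedge\Gamma\to\bigvee\Delta$ if $\Gamma\neq\emptyset$, $\bigvee\Delta$ otherwise, $\bigvee\emptyset=\bot$. Rules of $\mathsf{S.ConstCKCEM}$ (premisses / conclusion, $0\le|\Delta|\le1$, $n,k\ge0$): init: $\Gamma,p\Rightarrow p$; $\bot_L$: $\Gamma,\bot\Rightarrow\Delta$; $\wedge_L$: $\Gamma,\varphi,\psi\Rightarrow\Delta$ / $\Gamma,\varphi\wedge\psi\Rightarrow\Delta$; $\wedge_R$: $\Gamma\Rightarrow\varphi$, $\Gamma\Rightarrow\psi$ / $\Gamma\Rightarrow\varphi\wedge\psi$; $\vee_L$: $\Gamma,\varphi\Rightarrow\Delta$, $\Gamma,\psi\Rightarrow\Delta$ / $\Gamma,\varphi\vee\psi\Rightarrow\Delta$; $\vee_R^1$: $\Gamma\Rightarrow\varphi$ / $\Gamma\Rightarrow\varphi\vee\psi$; $\vee_R^2$: $\Gamma\Rightarrow\psi$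 / $\Gamma\Rightarrow\varphi\vee\psi$; $\to_R$: $\Gamma,\varphi\Rightarrow\psi$ / $\Gamma\Rightarrow\varphi\to\psi$; $\to_L$: $\Gamma,\varphi\to\psi\Rightarrow\varphi$, $\Gamma,\psi\Rightarrow\Delta$ / $\Gamma,\varphi\to\psi\Rightarrow\Delta$; $\Box$: $\{\varphi\Leftrightarrow\rho_i\}_{i\le n}$, $\sigma_1,\dots,\sigma_n\Rightarrow\psi$ / $\Gamma,\rho_1\mathrel{\Box\!\!\to}\sigma_1,\dots,\rho_n\mathrel{\Box\!\!\to}\sigma_n\Rightarrow\varphi\mathrel{\Box\!\!\to}\psi$; $\Diamond^{cem}$: $\{\varphi\Leftrightarrow\rho_i\}_{i\le n}$, $\{\varphi\Leftrightarrow\xi_j\}_{j\le k}$, $\varphi\Leftrightarrow\eta$, $\sigma_1,\dots,\sigma_n,\chi_1,\dots,\chi_k,\psi\Rightarrow\vartheta$ / $\Gamma,\rho_1\mathrel{\Box\!\!\to}\sigma_1,\dots,\rho_n\mathrel{\Box\!\!\to}\sigma_n,\xi_1\mathrel{\Diamond\!\!\to}\chi_1,\dots,\xi_k\mathrel{\Diamond\!\!\to}\chi_k,\varphi\mathrel{\Diamond\!\!\to}\psi\Rightarrow\eta\mathrel{\Diamond\!\!\to}\vartheta$; $\Box\Diamond^{cem}$: $\{\varphi\Leftrightarrow\rho_i\}_{i\le n}$, $\{\varphi\Leftrightarrow\xi_j\}_{j\le k}$, $\sigma_1,\dots,\sigma_n,\chi_1,\dots,\chi_k,\psi\Rightarrow$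 / $\Gamma,\rho_1\mathrel{\Box\!\!\to}\sigma_1,\dots,\rho_n\mathrel{\Box\!\!\to}\sigma_n,\xi_1\mathrel{\Diamond\!\!\to}\chi_1,\dots,\xi_k\mathrel{\Diamond\!\!\to}\chi_k,\varphi\mathrel{\Diamond\!\!\to}\psi\Rightarrow\Delta$. Height of a derivation: length of its longest branch minus 1. A rule is admissible if its conclusion is derivable whenever its premisses are; height-preserving admissible if moreover the conclusion has a derivation of height at most the maximal height of the premisses' derivations. *)

(* Defs.v *)
(* plain lists + Permutation model finite multisets. *)
From Stdlib Require Export List Permutation.
Import ListNotations.

Inductive form : Type :=
| Var : nat -> form
| Bot : form
| And : form -> form -> form
| Or  : form -> form -> form
| Imp : form -> form -> form
| Box : form -> form -> form
| Dia : form -> form -> form.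

Definition Neg (a : form) : form := Imp a Bot.
Definition Top : form := Neg Bot.
Definition Iff (a b : form) : form := And (Imp a b) (Imp b a).

Inductive ConstCKCEM : form -> Prop :=
| A1 a b : ConstCKCEM (Imp a (Imp b a))
| A2 a b c : ConstCKCEM (Imp (Imp a (Imp b c)) (Imp (Imp a b) (Imp a c)))
| A3 a b : ConstCKCEM (Imp (And a b) a)
| A4 a b : ConstCKCEM (Imp (And a b) b)
| A5 a b : ConstCKCEM (Imp a (Imp b (And a b)))
| A6 a b : ConstCKCEM (Imp a (Or a b))
| A7 a b : ConstCKCEM (Imp b (Or a b))
| A8 a b c : ConstCKCEM (Imp (Imp a c) (Imp (Imp b c) (Imp (Or a b) c)))
| A9 a : ConstCKCEM (Imp Bot a)
| MP a b : ConstCKCEM (Imp a b) -> ConstCKCEM a -> ConstCKCEM b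
| CM_box a b c : ConstCKCEM (Imp (Box a (And b c)) (And (Box a b) (Box a c)))
| CC_box a b c : ConstCKCEM (Imp (And (Box a b) (Box a c)) (Box a (And b c)))
| CN_box a : ConstCKCEM (Box a Top)
| CN_dia a : ConstCKCEM (Neg (Dia a Bot))
| CK_dia a b c : ConstCKCEM (Imp (Box a (Imp b c)) (Imp (Dia a b) (Dia a c)))
| RA_box a r b : ConstCKCEM (Iff a r) -> ConstCKCEM (Iff (Box a b) (Box r b))
| RC_box a b c : ConstCKCEM (Iff b c) -> ConstCKCEM (Iff (Box a b) (Box a c))
| RA_dia a r b : ConstCKCEM (Iff a r) -> ConstCKCEM (Iff (Dia a b) (Dia r b))
| RC_dia a b c : ConstCKCEM (Iff b c) -> ConstCKCEM (Iff (Dia a b) (Dia a c))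
| CEM_dia a b c : ConstCKCEM (Imp (And (Dia a b) (Dia a c)) (Dia a (And b c))).

(** * Sequents: antecedent = list (read as multiset), succedent = option form
    (|Delta| <= 1). *)
Definition boxes (l : list (form * form)) : list form :=
  map (fun p => Box (fst p) (snd p)) l.
Definition dias (l : list (form * form)) : list form :=
  map (fun p => Dia (fst p) (snd p)) l.

(** [SC n G D] : the sequent G => D has an S.ConstCKCEM derivation of height
    at most n.  Leaves (init, bot_L) have height 0; a rule application has
    height 1 + the maximum of its premisses' heights. *)
Inductive SC : nat -> list form -> option form -> Prop :=
| SC_init n G Gm p :
    Permutation G (Var p :: Gm) -> SC n G (Some (Var p))
| SC_botL n G Gm D :
    Permutation G (Bot :: Gm) -> SC n G D
| SC_andL n G Gm a b D :
    Permutation G (And a b :: Gm) -> SC n (a :: b :: Gm) D -> SC (S n) G D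
| SC_andR n G a b :
    SC n G (Some a) -> SC n G (Some b) -> SC (S n) G (Some (And a b))
| SC_orL n G Gm a b D :
    Permutation G (Or a b :: Gm) ->
    SC n (a :: Gm) D -> SC n (b :: Gm) D -> SC (S n) G D
| SC_orR1 n G a b : SC n G (Some a) -> SC (S n) G (Some (Or a b))
| SC_orR2 n G a b : SC n G (Some b) -> SC (S n) G (Some (Or a b))
| SC_impR n G a b : SC n (a :: G) (Some b) -> SC (S n) G (Some (Imp a b))
| SC_impL n G Gm a b D :
    Permutation G (Imp a b :: Gm) ->
    SC n (Imp a b :: Gm) (Some a) -> SC n (b :: Gm) D -> SC (S n) G D
| SC_box n G Gm (l : list (form * form)) phi psi :
    Permutation G (Gm ++ boxes l) ->
    (forall rs, In rs l -> SC n [phi] (Some (fst rs))) ->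
    (forall rs, In rs l -> SC n [fst rs] (Some phi)) ->
    SC n (map snd l) (Some psi) ->
    SC (S n) G (Some (Box phi psi))
| SC_dia_cem n G Gm (l k : list (form * form)) phi psi eta theta :
    Permutation G (Gm ++ boxes l ++ dias k ++ [Dia phi psi]) ->
    (forall rs, In rs l -> SC n [phi] (Some (fst rs))) ->
    (forall rs, In rs l -> SC n [fst rs] (Some phi)) ->
    (forall xc, In xc k -> SC n [phi] (Some (fst xc))) ->
    (forall xc, In xc k -> SC n [fst xc] (Some phi)) ->
    SC n [phi] (Some eta) -> SC n [eta] (Some phi) ->
    SC n (map snd l ++ map snd k ++ [psi]) (Some theta) ->
    SC (S n) G (Some (Dia eta theta))
| SC_boxdia_cem n G Gm (l k : list (form * form)) phi psi D :
    Permutation G (Gm ++ boxes l ++ dias k ++ [Dia phi psi]) ->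
    (forall rs, In rs l -> SC n [phi] (Some (fst rs))) ->
    (forall rs, In rs l -> SC n [fst rs] (Some phi)) ->
    (forall xc, In xc k -> SC n [phi] (Some (fst xc))) ->
    (forall xc, In xc k -> SC n [fst xc] (Some phi)) ->
    SC n (map snd l ++ map snd k ++ [psi]) None ->
    SC (S n) G D.

Definition derivable (G : list form) (D : option form) : Prop :=
  exists n, SC n G D.

Fixpoint bigAnd (G : list form) : form :=
  match G with
  | [] => Top
  | [a] => a
  | a :: G' => And a (bigAnd G')
  end.

Definition bigOr (D : option form) : form :=
  match D with None => Bot | Some a => a end.

Definition iota (G : list form) (D : option form) : form :=
  match G with
  | [] => bigOr D
  | _ => Imp (bigAnd G) (bigOr D)
  end.

(* Main.v *)
Require Import Defs.
From Stdlib Require Import Lia Arith.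
Import ListNotations.

Fixpoint size (f : form) : nat :=
  match f with
  | Var _ | Bot => 1
  | And a b | Or a b | Imp a b | Box a b | Dia a b => S (size a + size b)
  end.

Lemma size_pos f : 1 <= size f.
Proof. destruct f; simpl; lia. Qed.

Definition form_eq_dec : forall x y : form, {x = y} + {x <> y}.
Proof. decide equality; apply Nat.eq_dec. Defined.

Definition pf_eq_dec : forall x y : form * form, {x = y} + {x <> y}.
Proof. decide equality; apply form_eq_dec. Defined.

Lemma perm_cons_cases {A} (x y : A) l1 l2 :
  Permutation (x :: l1) (y :: l2) ->
  (x = y /\ Permutation l1 l2) \/
  (exists r, Permutation l1 (y :: r) /\ Permutation l2 (x :: r)).
Proof.
  intro H. assert (Hy : In y (x :: l1)) by (apply Permutation_in with (y :: l2); [symmetry; exact H| left; reflexivity]).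
  destruct Hy as [<- | Hy].
  - left. split; [reflexivity| eapply Permutation_cons_inv; exact H].
  - right. destruct (in_split _ _ Hy) as (A1 & A2 & ->).
    exists (A1 ++ A2). split.
    + symmetry. apply Permutation_middle.
    + apply Permutation_cons_inv with y. rewrite <- H.
      rewrite <- Permutation_middle. apply perm_swap.
Qed.

Lemma perm_app_cases {A} (x : A) l L R :
  Permutation (x :: l) (L ++ R) ->
  (exists L', Permutation L (x :: L') /\ Permutation l (L' ++ R)) \/
  (exists R', Permutation R (x :: R') /\ Permutation l (L ++ R')).
Proof.
  intro H. assert (Hx : In x (L ++ R)) by (apply Permutation_in with (x :: l); [exact H| left; reflexivity]).
  apply in_app_or in Hx. destruct Hx as [Hx|Hx].
  - left. destruct (in_split _ _ Hx) as (A1 & A2 & ->).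
    exists (A1 ++ A2). split.
    + symmetry. apply Permutation_middle.
    + apply Permutation_cons_inv with x. rewrite H.
      rewrite <- app_assoc. simpl. rewrite <- Permutation_middle. rewrite app_assoc. reflexivity.
  - right. destruct (in_split _ _ Hx) as (A1 & A2 & ->).
    exists (A1 ++ A2). split.
    + symmetry. apply Permutation_middle.
    + apply Permutation_cons_inv with x. rewrite H.
      rewrite <- Permutation_middle. rewrite app_assoc.
      rewrite <- Permutation_middle. rewrite app_assoc. reflexivity.
Qed.

Lemma in_perm {A} (x : A) G : In x G -> exists G0, Permutation G (x :: G0).
Proof.
  intro H. destruct (in_split _ _ H) as (A1 & A2 & ->).
  exists (A1 ++ A2). symmetry. apply Permutation_middle.
Qed.

Lemma nodup_incl_perm {A} (l m : list A) :
  NoDup l -> incl l m -> exists r, Permutation m (l ++ r).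
Proof.
  revert m. induction l as [|x l IH]; intros m Hnd Hinc.
  - exists m. reflexivity.
  - inversion Hnd as [|? ? Hx Hl]; subst.
    destruct (in_perm x m (Hinc x (or_introl eq_refl))) as [m0 Hm0].
    destruct (IH m0 Hl) as [r Hr].
    + intros y Hy. assert (In y (x :: m0)) as [->|?] by (eapply Permutation_in; [exact Hm0| apply Hinc; right; exact Hy]).
      * contradiction. * assumption.
    + exists r. rewrite Hm0. simpl. apply perm_skip. exact Hr.
Qed.

Lemma SC_perm n G D : SC n G D -> forall G', Permutation G G' -> SC n G' D.
Proof.
  induction 1; intros G'' HP.
  - eapply SC_init. rewrite <- HP. eassumption.
  - eapply SC_botL. rewrite <- HP. eassumption.
  - eapply SC_andL; [rewrite <- HP; eassumption| assumption].
  - apply SC_andR; auto.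
  - eapply SC_orL; [rewrite <- HP; eassumption| assumption| assumption].
  - apply SC_orR1; auto.
  - apply SC_orR2; auto.
  - apply SC_impR. apply IHSC. apply perm_skip. exact HP.
  - eapply SC_impL; [rewrite <- HP; eassumption| assumption| assumption].
  - eapply SC_box; [rewrite <- HP; eassumption| assumption..].
  - eapply SC_dia_cem; [rewrite <- HP; eassumption| assumption..].
  - eapply SC_boxdia_cem; [rewrite <- HP; eassumption| assumption..].
Qed.

Lemma SC_mono n G D : SC n G D -> forall m, n <= m -> SC m G D.
Proof.
  induction 1; intros m Hm; try (destruct m as [|m]; [lia|]).
  - eapply SC_init; eassumption.
  - eapply SC_botL; eassumption.
  - eapply SC_andL; [eassumption| apply IHSC; lia].
  - apply SC_andR; [apply IHSC1|apply IHSC2]; lia.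
  - eapply SC_orL; [eassumption| apply IHSC1; lia| apply IHSC2; lia].
  - apply SC_orR1; apply IHSC; lia.
  - apply SC_orR2; apply IHSC; lia.
  - apply SC_impR; apply IHSC; lia.
  - eapply SC_impL; [eassumption| apply IHSC1; lia| apply IHSC2; lia].
  - eapply SC_box; [eassumption| intros; first [eapply H1|eapply H3]; eauto; lia ..| apply IHSC; lia].
  - eapply SC_dia_cem; [eassumption| intros; eapply H1; eauto; lia | intros; eapply H3; eauto; lia | intros; eapply H5; eauto; lia | intros; eapply H7; eauto; lia | apply IHSC1; lia | apply IHSC2; lia | apply IHSC3; lia].
  - eapply SC_boxdia_cem; [eassumption| intros; eapply H1; eauto; lia | intros; eapply H3; eauto; lia | intros; eapply H5; eauto; lia | intros; eapply H7; eauto; lia | apply IHSC; lia].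
Qed.
Lemma pe_cons {A} (y x : A) T E : Permutation T (x :: E) -> Permutation (y :: T) (x :: y :: E).
Proof. intro H. rewrite H. apply perm_swap. Qed.
Lemma pe_app {A} (B : list A) x T E : Permutation T (x :: E) -> Permutation (B ++ T) (x :: B ++ E).
Proof. intro H. rewrite H. symmetry. apply Permutation_middle. Qed.
Lemma pa_last {A} (B : list A) : Permutation B (B ++ []).
Proof. rewrite app_nil_r. reflexivity. Qed.
Lemma pa_cons {A} (y : A) B T E : Permutation T (B ++ E) -> Permutation (y :: T) (B ++ y :: E).
Proof. intro H. rewrite H. apply Permutation_middle. Qed.
Lemma pa_app {A} (C B T E : list A) : Permutation T (B ++ E) -> Permutation (C ++ T) (B ++ C ++ E).
Proof. intro H. rewrite H. rewrite !app_assoc. apply Permutation_app_tail. apply Permutation_app_comm. Qed.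
Lemma ps_cons {A} (x : A) L R E : Permutation R (x :: E) -> Permutation L E -> Permutation (x :: L) R.
Proof. intros H1 H2. rewrite H1, H2. reflexivity. Qed.
Lemma ps_app {A} (B L R E : list A) : Permutation R (B ++ E) -> Permutation L E -> Permutation (B ++ L) R.
Proof. intros H1 H2. rewrite H1, H2. reflexivity. Qed.
Lemma ps_atom {A} (B R E : list A) : Permutation R (B ++ E) -> Permutation [] E -> Permutation B R.
Proof. intros H1 H2. rewrite H1, <- H2, app_nil_r. reflexivity. Qed.

Ltac pnorm := repeat progress (rewrite <- ?app_assoc; cbn [app]); rewrite ?app_nil_r.

Ltac pull_elt :=
  match goal with
  | |- Permutation (?x :: ?T) (?x :: ?E) => apply Permutation_refl
  | |- Permutation (?y :: ?T) (?x :: ?E) => eapply pe_cons; pull_elt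
  | |- Permutation (?B ++ ?T) (?x :: ?E) => eapply pe_app; pull_elt
  end.

Ltac pull_atom :=
  match goal with
  | |- Permutation (?B ++ ?T) (?B ++ ?E) => apply Permutation_refl
  | |- Permutation ?B (?B ++ ?E) => apply pa_last
  | |- Permutation (?y :: ?T) (?B ++ ?E) => eapply pa_cons; pull_atom
  | |- Permutation (?C ++ ?T) (?B ++ ?E) => eapply pa_app; pull_atom
  end.

Ltac psolve_rec :=
  match goal with
  | |- Permutation [] [] => apply perm_nil
  | |- Permutation (?x :: ?L) ?R => eapply ps_cons; [pull_elt | psolve_rec]
  | |- Permutation (?B ++ ?L) ?R => eapply ps_app; [pull_atom | psolve_rec]
  | |- Permutation ?B ?R => eapply ps_atom; [pull_atom | psolve_rec]
  end.

Ltac psolve := pnorm; psolve_rec.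

Goal forall (a b c : nat) (L M : list nat), Permutation (a :: L ++ b :: M ++ [c]) (M ++ c :: b :: L ++ [a]).
intros. psolve. Qed.
Goal forall (a b c : nat) (L M : list nat), Permutation (L ++ M) (M ++ L).
intros. psolve. Qed.
Lemma in_boxes x l : In x (boxes l) -> exists a b, x = Box a b /\ In (a, b) l.
Proof.
  unfold boxes. intro H. apply in_map_iff in H. destruct H as [[a b] [<- H]].
  exists a, b. auto.
Qed.

Lemma in_dias x l : In x (dias l) -> exists a b, x = Dia a b /\ In (a, b) l.
Proof.
  unfold dias. intro H. apply in_map_iff in H. destruct H as [[a b] [<- H]].
  exists a, b. auto.
Qed.

Definition nonmodal (x : form) := match x with Box _ _ | Dia _ _ => False | _ => True end.

Lemma nonmodal_notin_box x l : nonmodal x -> ~ In x (boxes l).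
Proof. intros Hx H. destruct (in_boxes _ _ H) as (a & b & -> & _). exact Hx. Qed.

Lemma nonmodal_notin_dia x l k p q : nonmodal x -> ~ In x (boxes l ++ dias k ++ [Dia p q]).
Proof.
  intros Hx H. apply in_app_or in H as [H|H].
  - destruct (in_boxes _ _ H) as (a & b & -> & _). exact Hx.
  - apply in_app_or in H as [H|[H|[]]].
    + destruct (in_dias _ _ H) as (a & b & -> & _). exact Hx.
    + subst. exact Hx.
Qed.

Lemma perm_notin_right {A} (x : A) G0 Gm M :
  Permutation (x :: G0) (Gm ++ M) -> ~ In x M ->
  exists Gm', Permutation Gm (x :: Gm') /\ Permutation G0 (Gm' ++ M).
Proof.
  intros H Hn. destruct (perm_app_cases _ _ _ _ H) as [(L' & H1 & H2)|(R' & H1 & H2)].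
  - eauto.
  - exfalso. apply Hn. apply Permutation_in with (x :: R'); [symmetry; exact H1| left; reflexivity].
Qed.

Lemma SC_init_in n G p : In (Var p) G -> SC n G (Some (Var p)).
Proof. intro H. destruct (in_perm _ _ H) as [G0 HG0]. eapply SC_init; eassumption. Qed.

Lemma SC_bot_in n G D : In Bot G -> SC n G D.
Proof. intro H. destruct (in_perm _ _ H) as [G0 HG0]. eapply SC_botL; eassumption. Qed.

Lemma in_perm_tail {A} (x y : A) G G0 : Permutation G (y :: G0) -> In x G -> x <> y -> In x G0.
Proof.
  intros HP Hx Hne. apply (Permutation_in _ HP) in Hx. destruct Hx as [->|Hx]; [congruence|exact Hx].
Qed.

Ltac modal_case_inv Hper HP Hnm :=
  destruct (perm_notin_right _ _ _ _ (Permutation_trans (Permutation_sym HP) Hper) Hnm) as (Gm' & Hq1 & Hq2).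


Lemma inv_andL n G D : SC n G D -> forall a b G0, Permutation G (And a b :: G0) -> SC n (a :: b :: G0) D.
Proof.
  induction 1; intros a0 b0 G0 HP.
  - apply SC_init_in. right; right. eapply in_perm_tail; [exact HP| |discriminate].
    eapply Permutation_in; [symmetry; exact H| left; reflexivity].
  - apply SC_bot_in. right; right. eapply in_perm_tail; [exact HP| |discriminate].
    eapply Permutation_in; [symmetry; exact H| left; reflexivity].
  - destruct (perm_cons_cases _ _ _ _ (Permutation_trans (Permutation_sym HP) H)) as [[Heq Hp]|(r & Hr1 & Hr2)].
    + injection Heq as -> ->. apply SC_mono with n; [|lia]. eapply SC_perm; [exact H0|].
      rewrite Hp; psolve.
    + eapply SC_andL with (Gm := a0 :: b0 :: r) (a := a) (b := b); [rewrite Hr1; psolve|].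
      eapply SC_perm; [apply (IHSC a0 b0 (a :: b :: r)); rewrite Hr2; psolve| psolve].
  - apply SC_andR; auto.
  - destruct (perm_cons_cases _ _ _ _ (Permutation_trans (Permutation_sym HP) H)) as [[Heq Hp]|(r & Hr1 & Hr2)].
    + discriminate.
    + eapply SC_orL with (Gm := a0 :: b0 :: r) (a := a) (b := b); [rewrite Hr1; psolve| |].
      * eapply SC_perm; [apply (IHSC1 a0 b0 (a :: r)); rewrite Hr2; psolve| psolve].
      * eapply SC_perm; [apply (IHSC2 a0 b0 (b :: r)); rewrite Hr2; psolve| psolve].
  - apply SC_orR1; auto.
  - apply SC_orR2; auto.
  - apply SC_impR. eapply SC_perm; [apply (IHSC a0 b0 (a :: G0)); rewrite HP; psolve| psolve].
  - destruct (perm_cons_cases _ _ _ _ (Permutation_trans (Permutation_sym HP) H)) as [[Heq Hp]|(r & Hr1 & Hr2)].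
    + discriminate.
    + eapply SC_impL with (Gm := a0 :: b0 :: r) (a := a) (b := b); [rewrite Hr1; psolve| |].
      * eapply SC_perm; [apply (IHSC1 a0 b0 (Imp a b :: r)); rewrite Hr2; psolve| psolve].
      * eapply SC_perm; [apply (IHSC2 a0 b0 (b :: r)); rewrite Hr2; psolve| psolve].
  - modal_case_inv H HP (nonmodal_notin_box (And a0 b0) l I).
    eapply SC_box with (Gm := a0 :: b0 :: Gm') (l := l); [rewrite Hq2; psolve| assumption ..].
  - modal_case_inv H HP (nonmodal_notin_dia (And a0 b0) l k phi psi I).
    eapply SC_dia_cem with (Gm := a0 :: b0 :: Gm') (l := l) (k := k) (phi := phi) (psi := psi); [rewrite Hq2; psolve| assumption ..].
  - modal_case_inv H HP (nonmodal_notin_dia (And a0 b0) l k phi psi I).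
    eapply SC_boxdia_cem with (Gm := a0 :: b0 :: Gm') (l := l) (k := k) (phi := phi) (psi := psi); [rewrite Hq2; psolve| assumption ..].
Qed.

Lemma inv_orL n G D : SC n G D -> forall a b G0, Permutation G (Or a b :: G0) ->
  forall x, (x = a \/ x = b) -> SC n (x :: G0) D.
Proof.
  induction 1; intros a0 b0 G0 HP x0 Hx0.
  - apply SC_init_in. right. eapply in_perm_tail; [exact HP| |discriminate].
    eapply Permutation_in; [symmetry; exact H| left; reflexivity].
  - apply SC_bot_in. right. eapply in_perm_tail; [exact HP| |discriminate].
    eapply Permutation_in; [symmetry; exact H| left; reflexivity].
  - destruct (perm_cons_cases _ _ _ _ (Permutation_trans (Permutation_sym HP) H)) as [[Heq Hp]|(r & Hr1 & Hr2)].
    + discriminate.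
    + eapply SC_andL with (Gm := x0 :: r) (a := a) (b := b); [rewrite Hr1; psolve|].
      eapply SC_perm; [apply (IHSC a0 b0 (a :: b :: r)); [rewrite Hr2; psolve|exact Hx0]| psolve].
  - apply SC_andR; eauto.
  - destruct (perm_cons_cases _ _ _ _ (Permutation_trans (Permutation_sym HP) H)) as [[Heq Hp]|(r & Hr1 & Hr2)].
    + injection Heq as -> ->. apply SC_mono with n; [|lia].
      destruct Hx0 as [->| ->]; match goal with Hs : SC n (?y :: Gm) D |- SC n (?y :: _) D => eapply SC_perm; [exact Hs| rewrite Hp; psolve] end.
    + eapply SC_orL with (Gm := x0 :: r) (a := a) (b := b); [rewrite Hr1; psolve| |].
      * eapply SC_perm; [apply (IHSC1 a0 b0 (a :: r)); [rewrite Hr2; psolve|exact Hx0]| psolve].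
      * eapply SC_perm; [apply (IHSC2 a0 b0 (b :: r)); [rewrite Hr2; psolve|exact Hx0]| psolve].
  - apply SC_orR1; eauto.
  - apply SC_orR2; eauto.
  - apply SC_impR. eapply SC_perm; [apply (IHSC a0 b0 (a :: G0)); [rewrite HP; psolve|exact Hx0]| psolve].
  - destruct (perm_cons_cases _ _ _ _ (Permutation_trans (Permutation_sym HP) H)) as [[Heq Hp]|(r & Hr1 & Hr2)].
    + discriminate.
    + eapply SC_impL with (Gm := x0 :: r) (a := a) (b := b); [rewrite Hr1; psolve| |].
      * eapply SC_perm; [apply (IHSC1 a0 b0 (Imp a b :: r)); [rewrite Hr2; psolve|exact Hx0]| psolve].
      * eapply SC_perm; [apply (IHSC2 a0 b0 (b :: r)); [rewrite Hr2; psolve|exact Hx0]| psolve].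
  - modal_case_inv H HP (nonmodal_notin_box (Or a0 b0) l I).
    eapply SC_box with (Gm := x0 :: Gm') (l := l); [rewrite Hq2; psolve| assumption ..].
  - modal_case_inv H HP (nonmodal_notin_dia (Or a0 b0) l k phi psi I).
    eapply SC_dia_cem with (Gm := x0 :: Gm') (l := l) (k := k) (phi := phi) (psi := psi); [rewrite Hq2; psolve| assumption ..].
  - modal_case_inv H HP (nonmodal_notin_dia (Or a0 b0) l k phi psi I).
    eapply SC_boxdia_cem with (Gm := x0 :: Gm') (l := l) (k := k) (phi := phi) (psi := psi); [rewrite Hq2; psolve| assumption ..].
Qed.

Lemma inv_impL n G D : SC n G D -> forall a b G0, Permutation G (Imp a b :: G0) -> SC n (b :: G0) D.
Proof.
  induction 1; intros a0 b0 G0 HP.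
  - apply SC_init_in. right. eapply in_perm_tail; [exact HP| |discriminate].
    eapply Permutation_in; [symmetry; exact H| left; reflexivity].
  - apply SC_bot_in. right. eapply in_perm_tail; [exact HP| |discriminate].
    eapply Permutation_in; [symmetry; exact H| left; reflexivity].
  - destruct (perm_cons_cases _ _ _ _ (Permutation_trans (Permutation_sym HP) H)) as [[Heq Hp]|(r & Hr1 & Hr2)].
    + discriminate.
    + eapply SC_andL with (Gm := b0 :: r) (a := a) (b := b); [rewrite Hr1; psolve|].
      eapply SC_perm; [apply (IHSC a0 b0 (a :: b :: r)); rewrite Hr2; psolve| psolve].
  - apply SC_andR; eauto.
  - destruct (perm_cons_cases _ _ _ _ (Permutation_trans (Permutation_sym HP) H)) as [[Heq Hp]|(r & Hr1 & Hr2)].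
    + discriminate.
    + eapply SC_orL with (Gm := b0 :: r) (a := a) (b := b); [rewrite Hr1; psolve| |].
      * eapply SC_perm; [apply (IHSC1 a0 b0 (a :: r)); rewrite Hr2; psolve| psolve].
      * eapply SC_perm; [apply (IHSC2 a0 b0 (b :: r)); rewrite Hr2; psolve| psolve].
  - apply SC_orR1; eauto.
  - apply SC_orR2; eauto.
  - apply SC_impR. eapply SC_perm; [apply (IHSC a0 b0 (a :: G0)); rewrite HP; psolve| psolve].
  - destruct (perm_cons_cases _ _ _ _ (Permutation_trans (Permutation_sym HP) H)) as [[Heq Hp]|(r & Hr1 & Hr2)].
    + injection Heq as -> ->. apply SC_mono with n; [|lia].
      eapply SC_perm; [eassumption| rewrite Hp; psolve].
    + eapply SC_impL with (Gm := b0 :: r) (a := a) (b := b); [rewrite Hr1; psolve| |].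
      * eapply SC_perm; [apply (IHSC1 a0 b0 (Imp a b :: r)); rewrite Hr2; psolve| psolve].
      * eapply SC_perm; [apply (IHSC2 a0 b0 (b :: r)); rewrite Hr2; psolve| psolve].
  - modal_case_inv H HP (nonmodal_notin_box (Imp a0 b0) l I).
    eapply SC_box with (Gm := b0 :: Gm') (l := l); [rewrite Hq2; psolve| assumption ..].
  - modal_case_inv H HP (nonmodal_notin_dia (Imp a0 b0) l k phi psi I).
    eapply SC_dia_cem with (Gm := b0 :: Gm') (l := l) (k := k) (phi := phi) (psi := psi); [rewrite Hq2; psolve| assumption ..].
  - modal_case_inv H HP (nonmodal_notin_dia (Imp a0 b0) l k phi psi I).
    eapply SC_boxdia_cem with (Gm := b0 :: Gm') (l := l) (k := k) (phi := phi) (psi := psi); [rewrite Hq2; psolve| assumption ..].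
Qed.

Lemma box_inj : FinFun.Injective (fun p : form * form => Box (fst p) (snd p)).
Proof. intros [a b] [c d] H. simpl in H. injection H as -> ->. reflexivity. Qed.
Lemma dia_inj : FinFun.Injective (fun p : form * form => Dia (fst p) (snd p)).
Proof. intros [a b] [c d] H. simpl in H. injection H as -> ->. reflexivity. Qed.

Lemma in_perm_app_r {A} (x : A) G Gm M : Permutation G (Gm ++ M) -> In x M -> In x G.
Proof. intros H Hx. apply Permutation_in with (Gm ++ M); [symmetry; exact H| apply in_or_app; right; exact Hx]. Qed.

Lemma boxes_incl l l2 : incl l2 l -> incl (boxes l2) (boxes l).
Proof. intros H y Hy. unfold boxes in *. apply in_map_iff in Hy as [p [<- Hp]]. apply in_map_iff. exists p. auto. Qed.
Lemma dias_incl l l2 : incl l2 l -> incl (dias l2) (dias l).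
Proof. intros H y Hy. unfold dias in *. apply in_map_iff in Hy as [p [<- Hp]]. apply in_map_iff. exists p. auto. Qed.

Lemma box_incl_setup G G' Gm l :
  Permutation G (Gm ++ boxes l) -> incl G G' ->
  exists l2 r, Permutation G' (r ++ boxes l2) /\ incl l2 l /\ incl (map snd l) (map snd l2).
Proof.
  intros HP Hinc. set (l2 := nodup pf_eq_dec l).
  assert (Hl2 : forall p, In p l2 <-> In p l) by (intro; apply nodup_In).
  destruct (nodup_incl_perm (boxes l2) G') as [r Hr].
  - apply FinFun.Injective_map_NoDup; [apply box_inj| apply NoDup_nodup].
  - intros y Hy. apply Hinc. eapply in_perm_app_r; [exact HP|].
    apply (boxes_incl l l2); [intros p Hp; apply Hl2; exact Hp| exact Hy].
  - exists l2, r. split; [rewrite Hr; apply Permutation_app_comm|]. split.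
    + intros p Hp. apply Hl2. exact Hp.
    + intros y Hy. apply in_map_iff in Hy as [p [<- Hp]]. apply in_map. apply Hl2. exact Hp.
Qed.

Lemma dia_incl_setup G G' Gm l k phi psi :
  Permutation G (Gm ++ boxes l ++ dias k ++ [Dia phi psi]) -> incl G G' ->
  exists l2 k2 r, Permutation G' (r ++ boxes l2 ++ dias k2 ++ [Dia phi psi]) /\ incl l2 l /\ incl k2 k /\
    incl (map snd l ++ map snd k ++ [psi]) (map snd l2 ++ map snd k2 ++ [psi]).
Proof.
  intros HP Hinc. set (l2 := nodup pf_eq_dec l).
  set (k2 := nodup pf_eq_dec (filter (fun p => if pf_eq_dec p (phi, psi) then false else true) k)).
  assert (Hl2 : forall p, In p l2 <-> In p l) by (intro; apply nodup_In).
  assert (Hk2 : forall p, In p k2 <-> In p k /\ p <> (phi, psi)).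
  { intro p. unfold k2. rewrite nodup_In, filter_In.
    destruct (pf_eq_dec p (phi, psi)); split; intros [? ?]; try congruence; auto. }
  destruct (nodup_incl_perm (boxes l2 ++ dias k2 ++ [Dia phi psi]) G') as [r Hr].
  - apply NoDup_app.
    + apply FinFun.Injective_map_NoDup; [apply box_inj| apply NoDup_nodup].
    + apply NoDup_app.
      * apply FinFun.Injective_map_NoDup; [apply dia_inj| apply NoDup_nodup].
      * constructor; [intros []| constructor].
      * intros y Hy [<-|[]]. apply in_dias in Hy as (a & b & Heq & Hab). injection Heq as -> ->.
        apply Hk2 in Hab as [_ Hab]. apply Hab. reflexivity.
    + intros y Hy1 Hy2. apply in_boxes in Hy1 as (a & b & -> & _).
      apply in_app_or in Hy2 as [Hy2|[Hy2|[]]]; [apply in_dias in Hy2 as (? & ? & Heq & _)|]; discriminate.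
  - intros y Hy. apply Hinc. eapply in_perm_app_r; [exact HP|].
    apply in_app_or in Hy as [Hy|Hy]; apply in_or_app; [left|right].
    + apply (boxes_incl l l2); [intros p Hp; apply Hl2; exact Hp| exact Hy].
    + apply in_app_or in Hy as [Hy|Hy]; apply in_or_app; [left|right; exact Hy].
      apply (dias_incl k k2); [intros p Hp; apply Hk2; exact Hp| exact Hy].
  - exists l2, k2, r. split; [rewrite Hr; apply Permutation_app_comm|]. split; [|split].
    + intros p Hp. apply Hl2. exact Hp.
    + intros p Hp. apply Hk2. exact Hp.
    + intros y Hy. apply in_app_or in Hy as [Hy|Hy]; apply in_or_app.
      * left. apply in_map_iff in Hy as [p [<- Hp]]. apply in_map. apply Hl2. exact Hp.
      * right. apply in_app_or in Hy as [Hy|Hy]; apply in_or_app; [|right; exact Hy].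
        apply in_map_iff in Hy as [p [<- Hp]].
        destruct (pf_eq_dec p (phi, psi)) as [->|Hne].
        -- right. left. reflexivity.
        -- left. apply in_map. apply Hk2. auto.
Qed.

Lemma incl_perm_cons {A} (x : A) G Gm G' : Permutation G (x :: Gm) -> incl G G' -> In x G' /\ incl Gm G'.
Proof.
  intros HP Hi. split.
  - apply Hi. apply Permutation_in with (x :: Gm); [symmetry; exact HP| left; reflexivity].
  - intros y Hy. apply Hi. apply Permutation_in with (x :: Gm); [symmetry; exact HP| right; exact Hy].
Qed.

Lemma SC_incl_aux N : forall n G D, SC n G D -> n <= N -> forall G', incl G G' -> SC n G' D.
Proof.
  induction N as [|N IHN]; intros n G D H HnN G' Hinc; destruct H;
    try (simpl in HnN; exfalso; lia); try (assert (HnN' : n <= N) by lia).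
  - apply SC_init_in. apply Hinc. apply Permutation_in with (Var p :: Gm); [symmetry; exact H| left; reflexivity].
  - apply SC_bot_in. apply Hinc. apply Permutation_in with (Bot :: Gm); [symmetry; exact H| left; reflexivity].
  - apply SC_init_in. apply Hinc. apply Permutation_in with (Var p :: Gm); [symmetry; exact H| left; reflexivity].
  - apply SC_bot_in. apply Hinc. apply Permutation_in with (Bot :: Gm); [symmetry; exact H| left; reflexivity].
  - destruct (incl_perm_cons _ _ _ _ H Hinc) as [Hin Hi2]. destruct (in_perm _ _ Hin) as [G0 HG0].
    eapply SC_andL; [exact HG0|].
    apply (IHN n (a :: b :: a :: b :: G0)); [|exact HnN'|intros y Hy; simpl in Hy |- *; tauto].
    apply (inv_andL n (a :: b :: G') D); [| rewrite HG0; psolve].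
    apply (IHN n _ _ H0 HnN'). intros y [<-|[<-|Hy]]; simpl; auto.
  - apply SC_andR; eapply IHN; eauto.
  - destruct (incl_perm_cons _ _ _ _ H Hinc) as [Hin Hi2]. destruct (in_perm _ _ Hin) as [G0 HG0].
    eapply SC_orL; [exact HG0| |].
    + apply (IHN n (a :: a :: G0)); [|exact HnN'|intros y Hy; simpl in Hy |- *; tauto].
      refine (inv_orL n (a :: G') D _ a b (a :: G0) _ a (or_introl eq_refl)); [| rewrite HG0; psolve].
      apply (IHN n _ _ H0 HnN'). intros y [<-|Hy]; simpl; auto.
    + apply (IHN n (b :: b :: G0)); [|exact HnN'|intros y Hy; simpl in Hy |- *; tauto].
      refine (inv_orL n (b :: G') D _ a b (b :: G0) _ b (or_intror eq_refl)); [| rewrite HG0; psolve].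
      apply (IHN n _ _ H1 HnN'). intros y [<-|Hy]; simpl; auto.
  - apply SC_orR1; eapply IHN; eauto.
  - apply SC_orR2; eapply IHN; eauto.
  - apply SC_impR. eapply IHN; eauto. intros y [<-|Hy]; simpl; auto.
  - destruct (incl_perm_cons _ _ _ _ H Hinc) as [Hin Hi2]. destruct (in_perm _ _ Hin) as [G0 HG0].
    eapply SC_impL; [exact HG0| |].
    + eapply SC_perm; [|exact HG0]. apply (IHN n _ _ H0 HnN').
      intros y [<-|Hy]; auto.
    + apply (IHN n (b :: b :: G0)); [|exact HnN'|intros y Hy; simpl in Hy |- *; tauto].
      refine (inv_impL n (b :: G') D _ a b (b :: G0) _); [| rewrite HG0; psolve].
      apply (IHN n _ _ H1 HnN'). intros y [<-|Hy]; simpl; auto.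
  - destruct (box_incl_setup _ _ _ _ H Hinc) as (l2 & r & HP & Hl & Hs).
    eapply SC_box; [exact HP| intros rs Hrs; auto ..| eapply IHN; eauto].
  - destruct (dia_incl_setup _ _ _ _ _ _ _ H Hinc) as (l2 & k2 & r & HP & Hl & Hk & Hs).
    eapply SC_dia_cem; [exact HP| intros rs Hrs; auto .. | assumption | assumption | eapply IHN; eauto].
  - destruct (dia_incl_setup _ _ _ _ _ _ _ H Hinc) as (l2 & k2 & r & HP & Hl & Hk & Hs).
    eapply SC_boxdia_cem; [exact HP| intros rs Hrs; auto .. | eapply IHN; eauto].
Qed.

Lemma SC_incl n G D G' : SC n G D -> incl G G' -> SC n G' D.
Proof. intros H Hi. eapply SC_incl_aux; eauto. Qed.

Lemma der_perm G G' D : derivable G D -> Permutation G G' -> derivable G' D.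
Proof. intros [n H] HP. exists n. eapply SC_perm; eauto. Qed.

Lemma der_incl G G' D : derivable G D -> incl G G' -> derivable G' D.
Proof. intros [n H] HP. exists n. eapply SC_incl; eauto. Qed.

Lemma der_two G1 D1 G2 D2 : derivable G1 D1 -> derivable G2 D2 ->
  exists n, SC n G1 D1 /\ SC n G2 D2.
Proof.
  intros [n1 H1] [n2 H2]. exists (n1 + n2). split; eapply SC_mono; eauto; lia.
Qed.

Lemma collect {X} (l : list X) (P : X -> nat -> Prop) :
  (forall x n m, P x n -> n <= m -> P x m) -> (forall x, In x l -> exists n, P x n) ->
  exists n, forall x, In x l -> P x n.
Proof.
  intros Hm. induction l as [|x l IH]; intros H.
  - exists 0. intros _ [].
  - destruct (H x (or_introl eq_refl)) as [n1 H1].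
    destruct IH as [n2 H2]; [intros; apply H; right; auto|].
    exists (n1 + n2). intros y [<-|Hy]; eapply Hm; eauto; lia.
Qed.

Lemma d_init G p : In (Var p) G -> derivable G (Some (Var p)).
Proof. intro H. exists 0. apply SC_init_in. exact H. Qed.
Lemma d_bot G D : In Bot G -> derivable G D.
Proof. intro H. exists 0. apply SC_bot_in. exact H. Qed.
Lemma d_andL G Gm a b D : Permutation G (And a b :: Gm) -> derivable (a :: b :: Gm) D -> derivable G D.
Proof. intros HP [n H]. exists (S n). eapply SC_andL; eauto. Qed.
Lemma d_andR G a b : derivable G (Some a) -> derivable G (Some b) -> derivable G (Some (And a b)).
Proof. intros H1 H2. destruct (der_two _ _ _ _ H1 H2) as (n & ? & ?). exists (S n). apply SC_andR; auto. Qed.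
Lemma d_orL G Gm a b D : Permutation G (Or a b :: Gm) -> derivable (a :: Gm) D -> derivable (b :: Gm) D -> derivable G D.
Proof. intros HP H1 H2. destruct (der_two _ _ _ _ H1 H2) as (n & ? & ?). exists (S n). eapply SC_orL; eauto. Qed.
Lemma d_orR1 G a b : derivable G (Some a) -> derivable G (Some (Or a b)).
Proof. intros [n H]. exists (S n). apply SC_orR1; auto. Qed.
Lemma d_orR2 G a b : derivable G (Some b) -> derivable G (Some (Or a b)).
Proof. intros [n H]. exists (S n). apply SC_orR2; auto. Qed.
Lemma d_impR G a b : derivable (a :: G) (Some b) -> derivable G (Some (Imp a b)).
Proof. intros [n H]. exists (S n). apply SC_impR; auto. Qed.
Lemma d_impL G Gm a b D : Permutation G (Imp a b :: Gm) -> derivable (Imp a b :: Gm) (Some a) -> derivable (b :: Gm) D -> derivable G D.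
Proof. intros HP H1 H2. destruct (der_two _ _ _ _ H1 H2) as (n & ? & ?). exists (S n). eapply SC_impL; eauto. Qed.

Definition EqD (phi : form) (l : list (form * form)) :=
  forall rs, In rs l -> derivable [phi] (Some (fst rs)) /\ derivable [fst rs] (Some phi).

Definition EqC n (phi : form) (l : list (form * form)) :=
  forall rs, In rs l -> SC n [phi] (Some (fst rs)) /\ SC n [fst rs] (Some phi).

Lemma EqC_mono n m phi l : EqC n phi l -> n <= m -> EqC m phi l.
Proof. intros H Hle rs Hrs. destruct (H rs Hrs). split; eapply SC_mono; eauto. Qed.

Lemma EqD_C phi l : EqD phi l -> exists n, EqC n phi l.
Proof.
  intro H. apply (collect l (fun rs n => SC n [phi] (Some (fst rs)) /\ SC n [fst rs] (Some phi))).
  - intros x n m [? ?] ?; split; eapply SC_mono; eauto.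
  - intros x Hx. destruct (H x Hx) as [H1 H2]. destruct (der_two _ _ _ _ H1 H2) as (n & ? & ?). eauto.
Qed.

Lemma EqC_D n phi l : EqC n phi l -> EqD phi l.
Proof. intros H rs Hrs. destruct (H rs Hrs). split; eexists; eauto. Qed.

Lemma EqD_app phi l1 l2 : EqD phi l1 -> EqD phi l2 -> EqD phi (l1 ++ l2).
Proof. intros H1 H2 rs Hrs. apply in_app_or in Hrs as [?|?]; auto. Qed.

Lemma EqD_cons phi x l : EqD phi (x :: l) -> EqD phi l.
Proof. intros H rs Hrs. apply H. right. exact Hrs. Qed.

Lemma d_box G Gm l phi psi : Permutation G (Gm ++ boxes l) -> EqD phi l ->
  derivable (map snd l) (Some psi) -> derivable G (Some (Box phi psi)).
Proof.
  intros HP HE [n2 H2]. destruct (EqD_C _ _ HE) as [n1 H1].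
  exists (S (n1 + n2)). eapply SC_box; [exact HP| | |eapply SC_mono; [exact H2|lia]];
  intros rs Hrs; destruct (H1 rs Hrs); eapply SC_mono; eauto; lia.
Qed.

Definition DConc (phi : form) (S : list form) (D : option form) :=
  (exists eta theta, D = Some (Dia eta theta) /\ derivable [phi] (Some eta) /\ derivable [eta] (Some phi) /\
                     derivable S (Some theta)) \/ derivable S None.

Lemma DConc_perm phi S S' D : DConc phi S D -> Permutation S S' -> DConc phi S' D.
Proof.
  intros [(eta & theta & -> & H1 & H2 & H3)|H] HP.
  - left. exists eta, theta. repeat split; auto. eapply der_perm; eauto.
  - right. eapply der_perm; eauto.
Qed.

Lemma d_dia G Gm l k phi psi D : Permutation G (Gm ++ boxes l ++ dias k ++ [Dia phi psi]) ->
  EqD phi l -> EqD phi k -> DConc phi (map snd l ++ map snd k ++ [psi]) D -> derivable G D.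
Proof.
  intros HP Hl Hk HD. destruct (EqD_C _ _ Hl) as [n1 H1]. destruct (EqD_C _ _ Hk) as [n2 H2].
  destruct HD as [(eta & theta & -> & E1 & E2 & E3)|E].
  - destruct E1 as [m1 E1]. destruct E2 as [m2 E2]. destruct E3 as [m3 E3].
    exists (S (n1 + n2 + m1 + m2 + m3)). eapply SC_dia_cem; [exact HP| | | | | | |].
    all: try (intros rs Hrs; first [destruct (H1 rs Hrs)| destruct (H2 rs Hrs)]; eapply SC_mono; eauto; lia).
    all: eapply SC_mono; eauto; lia.
  - destruct E as [m3 E3].
    exists (S (n1 + n2 + m3)). eapply SC_boxdia_cem; [exact HP| | | | |].
    all: try (intros rs Hrs; first [destruct (H1 rs Hrs)| destruct (H2 rs Hrs)]; eapply SC_mono; eauto; lia).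
    all: eapply SC_mono; eauto; lia.
Qed.

Definition Bnd s (l : list form) := forall x, In x l -> size x <= s.
Definition BndO s (D : option form) := forall x, D = Some x -> size x <= s.

Lemma Bnd_perm s l l' : Bnd s l -> Permutation l l' -> Bnd s l'.
Proof. intros H HP x Hx. apply H. apply Permutation_in with l'; [symmetry; exact HP| exact Hx]. Qed.
Lemma Bnd_inv s l x r : Bnd s l -> Permutation l (x :: r) -> size x <= s /\ Bnd s r.
Proof.
  intros H HP. split.
  - apply H. apply Permutation_in with (x :: r); [symmetry; exact HP| left; reflexivity].
  - intros y Hy. apply H. apply Permutation_in with (x :: r); [symmetry; exact HP| right; exact Hy].
Qed.
Lemma Bnd_cons s x r : size x <= s -> Bnd s r -> Bnd s (x :: r).
Proof. intros H1 H2 y [<-|Hy]; auto. Qed.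
Lemma Bnd_app s l1 l2 : Bnd s l1 -> Bnd s l2 -> Bnd s (l1 ++ l2).
Proof. intros H1 H2 y Hy. apply in_app_or in Hy as [?|?]; auto. Qed.
Lemma Bnd_app_inv s l1 l2 : Bnd s (l1 ++ l2) -> Bnd s l1 /\ Bnd s l2.
Proof. intros H. split; intros y Hy; apply H; apply in_or_app; auto. Qed.
Lemma Bnd_nil s : Bnd s [].
Proof. intros y []. Qed.
Lemma BndO_some s x : size x <= s -> BndO s (Some x).
Proof. intros H y Hy. injection Hy as <-. exact H. Qed.
Lemma BndO_none s : BndO s None.
Proof. intros y Hy. discriminate. Qed.
Lemma BndO_inv s x : BndO s (Some x) -> size x <= s.
Proof. intro H. apply H. reflexivity. Qed.

Lemma Bnd_boxes s l : Bnd s (boxes l) -> forall rs, In rs l -> size (fst rs) < s /\ size (snd rs) < s.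
Proof.
  intros H rs Hrs. assert (Hb : In (Box (fst rs) (snd rs)) (boxes l)) by (apply in_map_iff; exists rs; auto).
  apply H in Hb. simpl in Hb. lia.
Qed.
Lemma Bnd_dias s l : Bnd s (dias l) -> forall rs, In rs l -> size (fst rs) < s /\ size (snd rs) < s.
Proof.
  intros H rs Hrs. assert (Hb : In (Dia (fst rs) (snd rs)) (dias l)) by (apply in_map_iff; exists rs; auto).
  apply H in Hb. simpl in Hb. lia.
Qed.

Lemma boxes_perm_cons c M' l : Permutation (boxes l) (c :: M') ->
  exists x y lr, c = Box x y /\ Permutation l ((x, y) :: lr) /\ Permutation M' (boxes lr).
Proof.
  intro HP. assert (Hc : In c (boxes l)) by (apply Permutation_in with (c :: M'); [symmetry; exact HP| left; reflexivity]).
  apply in_boxes in Hc as (x & y & -> & Hxy). destruct (in_perm _ _ Hxy) as [lr Hlr].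
  exists x, y, lr. split; [reflexivity|]. split; [exact Hlr|].
  apply Permutation_cons_inv with (Box x y). rewrite <- HP. unfold boxes. rewrite Hlr. reflexivity.
Qed.
Lemma dias_perm_cons c M' l : Permutation (dias l) (c :: M') ->
  exists x y lr, c = Dia x y /\ Permutation l ((x, y) :: lr) /\ Permutation M' (dias lr).
Proof.
  intro HP. assert (Hc : In c (dias l)) by (apply Permutation_in with (c :: M'); [symmetry; exact HP| left; reflexivity]).
  apply in_dias in Hc as (x & y & -> & Hxy). destruct (in_perm _ _ Hxy) as [lr Hlr].
  exists x, y, lr. split; [reflexivity|]. split; [exact Hlr|].
  apply Permutation_cons_inv with (Dia x y). rewrite <- HP. unfold dias. rewrite Hlr. reflexivity.
Qed.

Lemma box_part_cases c G' Gm l : Permutation (c :: G') (Gm ++ boxes l) ->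
  (exists Gm', Permutation Gm (c :: Gm') /\ Permutation G' (Gm' ++ boxes l)) \/
  (exists x y lr, c = Box x y /\ Permutation l ((x, y) :: lr) /\ Permutation G' (Gm ++ boxes lr)).
Proof.
  intro HP. destruct (perm_app_cases _ _ _ _ HP) as [H|(R' & H1 & H2)]; [left; exact H|right].
  destruct (boxes_perm_cons _ _ _ H1) as (x & y & lr & -> & Hl & HR).
  exists x, y, lr. repeat split; auto. rewrite H2, HR. reflexivity.
Qed.

Lemma dia_part_cases c G' Gm l k phi psi : Permutation (c :: G') (Gm ++ boxes l ++ dias k ++ [Dia phi psi]) ->
  (exists Gm', Permutation Gm (c :: Gm') /\ Permutation G' (Gm' ++ boxes l ++ dias k ++ [Dia phi psi])) \/
  (exists x y lr, c = Box x y /\ Permutation l ((x, y) :: lr) /\ Permutation G' (Gm ++ boxes lr ++ dias k ++ [Dia phi psi])) \/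
  (exists x y kr, c = Dia x y /\ Permutation k ((x, y) :: kr) /\ Permutation G' (Gm ++ boxes l ++ dias kr ++ [Dia phi psi])) \/
  (c = Dia phi psi /\ Permutation G' (Gm ++ boxes l ++ dias k)).
Proof.
  intro HP. destruct (perm_app_cases _ _ _ _ HP) as [H|(R' & H1 & H2)]; [left; exact H|right].
  destruct (perm_app_cases _ _ _ _ (Permutation_sym H1)) as [(L' & H3 & H4)|(R'' & H3 & H4)].
  - left. destruct (boxes_perm_cons _ _ _ H3) as (x & y & lr & -> & Hl & HR).
    exists x, y, lr. repeat split; auto. rewrite H2, H4, HR. reflexivity.
  - right. destruct (perm_app_cases _ _ _ _ (Permutation_sym H3)) as [(L' & H5 & H6)|(R3 & H5 & H6)].
    + left. destruct (dias_perm_cons _ _ _ H5) as (x & y & kr & -> & Hk & HK).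
      exists x, y, kr. repeat split; auto. rewrite H2, H4, H6, HK. reflexivity.
    + right. destruct R3; [|apply Permutation_length in H5; discriminate].
      apply Permutation_length_1 in H5. subst c. split; [reflexivity|].
      rewrite H2, H4, H6. rewrite app_nil_r. reflexivity.
Qed.

Lemma EqC_perm_D n phi l l' : EqC n phi l -> Permutation l l' -> EqD phi l'.
Proof.
  intros H HP rs Hrs. apply (Permutation_in _ (Permutation_sym HP)) in Hrs.
  destruct (H rs Hrs). split; eexists; eauto.
Qed.

Lemma map_snd_perm (l lr : list (form * form)) x y :
  Permutation l ((x, y) :: lr) -> Permutation (map snd l) (y :: map snd lr).
Proof. intro H. change (y :: map snd lr) with (map snd ((x, y) :: lr)). apply Permutation_map. exact H. Qed.

Inductive PR (G : list form) (c : form) (G' : list form) (D : option form) : Prop :=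
| PR_and a b : c = And a b -> derivable (a :: b :: G') D -> PR G c G' D
| PR_or a b : c = Or a b -> derivable (a :: G') D -> derivable (b :: G') D -> PR G c G' D
| PR_imp a b : c = Imp a b -> derivable (G ++ G') (Some a) -> derivable (b :: G') D -> PR G c G' D
| PR_box x y Gm lr phi psi : c = Box x y -> Permutation G' (Gm ++ boxes lr) -> D = Some (Box phi psi) ->
    EqD phi ((x, y) :: lr) -> derivable (y :: map snd lr) (Some psi) -> PR G c G' D
| PR_dbox x y Gm lr k phi psi : c = Box x y -> Permutation G' (Gm ++ boxes lr ++ dias k ++ [Dia phi psi]) ->
    EqD phi ((x, y) :: lr) -> EqD phi k -> DConc phi (y :: map snd lr ++ map snd k ++ [psi]) D -> PR G c G' D
| PR_ddia x y Gm l kr phi psi : c = Dia x y -> Permutation G' (Gm ++ boxes l ++ dias kr ++ [Dia phi psi]) ->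
    EqD phi l -> EqD phi ((x, y) :: kr) -> DConc phi (y :: map snd l ++ map snd kr ++ [psi]) D -> PR G c G' D
| PR_dpr Gm l k phi psi : c = Dia phi psi -> Permutation G' (Gm ++ boxes l ++ dias k) ->
    EqD phi l -> EqD phi k -> DConc phi (psi :: map snd l ++ map snd k) D -> PR G c G' D.

Lemma right_gen s G c : forall m G0 D, SC m G0 D -> forall G', G0 = c :: G' ->
  (forall p, c <> Var p) -> c <> Bot -> size c <= s -> Bnd s G' -> BndO s D ->
  (forall m' G'' D', m' < m -> Bnd s G'' -> BndO s D' -> SC m' (c :: G'') D' -> derivable (G ++ G'') D') ->
  (PR G c G' D -> derivable (G ++ G') D) ->
  derivable (G ++ G') D.
Proof.
  intros m G0 D R; destruct R as [n Gx Gm p HP | n Gx Gm D HP | n Gx Gm a b D HP P1 | n Gx a b P1 P2 | n Gx Gm a b D HP P1 P2 | n Gx a b P1 | n Gx a b P1 | n Gx a b P1 | n Gx Gm a b D HP P1 P2 | n Gx Gm l phi psi HP C1 C2 P1 | n Gx Gm l k phi psi eta theta HP C1 C2 C3 C4 E1 E2 P1 | n Gx Gm l k phi psi D HP C1 C2 C3 C4 P1]; intros G' HG0 Hv Hb Hc HG' HD IHr HPR; subst Gx.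
  - destruct (perm_cons_cases _ _ _ _ HP) as [[Heq _]|(r & Hr1 & Hr2)]; [exfalso; eapply Hv; exact Heq|].
    apply d_init. apply in_or_app. right. apply Permutation_in with (Var p :: r); [symmetry; exact Hr1| left; reflexivity].
  - destruct (perm_cons_cases _ _ _ _ HP) as [[Heq _]|(r & Hr1 & Hr2)]; [contradiction|].
    apply d_bot. apply in_or_app. right. apply Permutation_in with (Bot :: r); [symmetry; exact Hr1| left; reflexivity].
  - destruct (perm_cons_cases _ _ _ _ HP) as [[Heq Hp]|(r & Hr1 & Hr2)].
    + apply HPR. eapply PR_and; [exact Heq|]. exists n. eapply SC_perm; [exact P1| rewrite Hp; psolve].
    + destruct (Bnd_inv _ _ _ _ HG' Hr1) as [Hs Hr]. simpl in Hs.
      assert (Hd : derivable (G ++ a :: b :: r) D).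
      { apply (IHr n); [lia| |exact HD|].
        - apply Bnd_cons; [lia|]. apply Bnd_cons; [lia| exact Hr].
        - eapply SC_perm; [exact P1| rewrite Hr2; psolve]. }
      eapply d_andL with (Gm := G ++ r) (a := a) (b := b); [rewrite Hr1; psolve| eapply der_perm; [exact Hd| psolve]].
  - pose proof (BndO_inv _ _ HD) as Hs. simpl in Hs.
    apply d_andR; (apply (IHr n); [lia|exact HG'|apply BndO_some; lia|assumption]).
  - destruct (perm_cons_cases _ _ _ _ HP) as [[Heq Hp]|(r & Hr1 & Hr2)].
    + apply HPR. eapply PR_or; [exact Heq| |].
      * exists n. eapply SC_perm; [exact P1| rewrite Hp; psolve].
      * exists n. eapply SC_perm; [exact P2| rewrite Hp; psolve].
    + destruct (Bnd_inv _ _ _ _ HG' Hr1) as [Hs Hr]. simpl in Hs.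
      assert (Hd1 : derivable (G ++ a :: r) D).
      { apply (IHr n); [lia| |exact HD|].
        - apply Bnd_cons; [lia| exact Hr].
        - eapply SC_perm; [exact P1| rewrite Hr2; psolve]. }
      assert (Hd2 : derivable (G ++ b :: r) D).
      { apply (IHr n); [lia| |exact HD|].
        - apply Bnd_cons; [lia| exact Hr].
        - eapply SC_perm; [exact P2| rewrite Hr2; psolve]. }
      eapply d_orL with (Gm := G ++ r) (a := a) (b := b); [rewrite Hr1; psolve| eapply der_perm; [exact Hd1| psolve]| eapply der_perm; [exact Hd2| psolve]].
  - pose proof (BndO_inv _ _ HD) as Hs. simpl in Hs.
    apply d_orR1; (apply (IHr n); [lia|exact HG'|apply BndO_some; lia|assumption]).
  - pose proof (BndO_inv _ _ HD) as Hs. simpl in Hs.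
    apply d_orR2; (apply (IHr n); [lia|exact HG'|apply BndO_some; lia|assumption]).
  - pose proof (BndO_inv _ _ HD) as Hs. simpl in Hs.
    apply d_impR. assert (Hd : derivable (G ++ a :: G') (Some b)).
    { apply (IHr n); [lia| apply Bnd_cons; [lia|exact HG']| apply BndO_some; lia|].
      eapply SC_perm; [exact P1| psolve]. }
    eapply der_perm; [exact Hd| psolve].
  - destruct (perm_cons_cases _ _ _ _ HP) as [[Heq Hp]|(r & Hr1 & Hr2)].
    + subst c. simpl in Hc. apply HPR. eapply PR_imp; [reflexivity| |].
      * apply (IHr n); [lia| exact HG'| apply BndO_some; lia|]. eapply SC_perm; [exact P1| rewrite Hp; psolve].
      * exists n. eapply SC_perm; [exact P2| rewrite Hp; psolve].
    + destruct (Bnd_inv _ _ _ _ HG' Hr1) as [Hs Hr]. simpl in Hs.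
      assert (Hd1 : derivable (G ++ Imp a b :: r) (Some a)).
      { apply (IHr n); [lia| |apply BndO_some; lia|].
        - apply Bnd_cons; [simpl; lia| exact Hr].
        - eapply SC_perm; [exact P1| rewrite Hr2; psolve]. }
      assert (Hd2 : derivable (G ++ b :: r) D).
      { apply (IHr n); [lia| |exact HD|].
        - apply Bnd_cons; [lia| exact Hr].
        - eapply SC_perm; [exact P2| rewrite Hr2; psolve]. }
      eapply d_impL with (Gm := G ++ r) (a := a) (b := b); [rewrite Hr1; psolve| eapply der_perm; [exact Hd1| psolve]| eapply der_perm; [exact Hd2| psolve]].
  - destruct (box_part_cases _ _ _ _ HP) as [(Gm' & H3 & H4)|(x & y & lr & -> & Hl & H4)].
    + exists (S n). eapply SC_box with (Gm := G ++ Gm') (l := l); [rewrite H4; psolve| assumption ..].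
    + apply HPR. eapply PR_box; [reflexivity| exact H4| reflexivity| |].
      * eapply EqC_perm_D; [intros rs Hrs; split; [apply C1|apply C2]; exact Hrs| exact Hl].
      * exists n. eapply SC_perm; [exact P1| apply (map_snd_perm _ _ x); exact Hl].
  - destruct (dia_part_cases _ _ _ _ _ _ _ HP) as [(Gm' & H8 & H9)|[(x & y & lr & -> & Hl & H9)|[(x & y & kr & -> & Hk & H9)|[-> H9]]]].
    + exists (S n). eapply SC_dia_cem with (Gm := G ++ Gm') (l := l) (k := k) (phi := phi) (psi := psi); [rewrite H9; psolve| assumption ..].
    + apply HPR. eapply PR_dbox; [reflexivity| exact H9| | |].
      * eapply EqC_perm_D; [intros rs Hrs; split; [apply C1|apply C2]; exact Hrs| exact Hl].
      * intros rs Hrs; split; eexists; [apply C3|apply C4]; exact Hrs.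
      * left. exists eta, theta. split; [reflexivity|]. split; [eexists; eauto|]. split; [eexists; eauto|].
        exists n. eapply SC_perm; [exact P1| rewrite (map_snd_perm _ _ x y Hl); psolve].
    + apply HPR. eapply PR_ddia; [reflexivity| exact H9| | |].
      * intros rs Hrs; split; eexists; [apply C1|apply C2]; exact Hrs.
      * eapply EqC_perm_D; [intros rs Hrs; split; [apply C3|apply C4]; exact Hrs| exact Hk].
      * left. exists eta, theta. split; [reflexivity|]. split; [eexists; eauto|]. split; [eexists; eauto|].
        exists n. eapply SC_perm; [exact P1| rewrite (map_snd_perm _ _ x y Hk); psolve].
    + apply HPR. eapply PR_dpr; [reflexivity| exact H9| | |].
      * intros rs Hrs; split; eexists; [apply C1|apply C2]; exact Hrs.
      * intros rs Hrs; split; eexists; [apply C3|apply C4]; exact Hrs.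
      * left. exists eta, theta. split; [reflexivity|]. split; [eexists; eauto|]. split; [eexists; eauto|].
        exists n. eapply SC_perm; [exact P1| psolve].
  - destruct (dia_part_cases _ _ _ _ _ _ _ HP) as [(Gm' & H8 & H9)|[(x & y & lr & -> & Hl & H9)|[(x & y & kr & -> & Hk & H9)|[-> H9]]]].
    + exists (S n). eapply SC_boxdia_cem with (Gm := G ++ Gm') (l := l) (k := k) (phi := phi) (psi := psi); [rewrite H9; psolve| assumption ..].
    + apply HPR. eapply PR_dbox; [reflexivity| exact H9| | |].
      * eapply EqC_perm_D; [intros rs Hrs; split; [apply C1|apply C2]; exact Hrs| exact Hl].
      * intros rs Hrs; split; eexists; [apply C3|apply C4]; exact Hrs.
      * right. exists n. eapply SC_perm; [exact P1| rewrite (map_snd_perm _ _ x y Hl); psolve].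
    + apply HPR. eapply PR_ddia; [reflexivity| exact H9| | |].
      * intros rs Hrs; split; eexists; [apply C1|apply C2]; exact Hrs.
      * eapply EqC_perm_D; [intros rs Hrs; split; [apply C3|apply C4]; exact Hrs| exact Hk].
      * right. exists n. eapply SC_perm; [exact P1| rewrite (map_snd_perm _ _ x y Hk); psolve].
    + apply HPR. eapply PR_dpr; [reflexivity| exact H9| | |].
      * intros rs Hrs; split; eexists; [apply C1|apply C2]; exact Hrs.
      * intros rs Hrs; split; eexists; [apply C3|apply C4]; exact Hrs.
      * right. exists n. eapply SC_perm; [exact P1| psolve].
Qed.

Lemma boxes_app l1 l2 : boxes (l1 ++ l2) = boxes l1 ++ boxes l2.
Proof. unfold boxes. apply map_app. Qed.
Lemma dias_app l1 l2 : dias (l1 ++ l2) = dias l1 ++ dias l2.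
Proof. unfold dias. apply map_app. Qed.

Definition Lt s (l : list form) := forall x, In x l -> size x < s.
Lemma Lt_app s l1 l2 : Lt s l1 -> Lt s l2 -> Lt s (l1 ++ l2).
Proof. intros H1 H2 y Hy. apply in_app_or in Hy as [?|?]; auto. Qed.
Lemma Lt_cons s x l : size x < s -> Lt s l -> Lt s (x :: l).
Proof. intros H1 H2 y [<-|Hy]; auto. Qed.
Lemma Lt_nil s : Lt s [].
Proof. intros y []. Qed.
Lemma Lt_snd_boxes s l : Bnd s (boxes l) -> Lt s (map snd l).
Proof. intros H y Hy. apply in_map_iff in Hy as [rs [<- Hrs]]. apply (Bnd_boxes s l H rs Hrs). Qed.
Lemma Lt_snd_dias s l : Bnd s (dias l) -> Lt s (map snd l).
Proof. intros H y Hy. apply in_map_iff in Hy as [rs [<- Hrs]]. apply (Bnd_dias s l H rs Hrs). Qed.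

Lemma Bnd_part_box s G Gm l : Bnd s G -> Permutation G (Gm ++ boxes l) -> Bnd s (boxes l).
Proof. intros H HP. apply (Bnd_app_inv s Gm). eapply Bnd_perm; eauto. Qed.
Lemma Bnd_part_dia s G Gm l k phi psi : Bnd s G -> Permutation G (Gm ++ boxes l ++ dias k ++ [Dia phi psi]) ->
  Bnd s (boxes l) /\ Bnd s (dias k) /\ size (Dia phi psi) <= s.
Proof.
  intros H HP. apply (Bnd_perm _ _ _ H) in HP. apply Bnd_app_inv in HP as [_ HP].
  apply Bnd_app_inv in HP as [H1 HP]. apply Bnd_app_inv in HP as [H2 H3].
  repeat split; auto. apply H3. left. reflexivity.
Qed.
Lemma Bnd_part_dia2 s G Gm l k : Bnd s G -> Permutation G (Gm ++ boxes l ++ dias k) ->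
  Bnd s (boxes l) /\ Bnd s (dias k).
Proof.
  intros H HP. apply (Bnd_perm _ _ _ H) in HP. apply Bnd_app_inv in HP as [_ HP].
  apply Bnd_app_inv in HP as [H1 H2]. auto.
Qed.

Lemma DConc_mod phi phi' S S' D :
  DConc phi S D ->
  (forall eta theta, D = Some (Dia eta theta) -> derivable [phi] (Some eta) -> derivable [eta] (Some phi) ->
     derivable S (Some theta) ->
     derivable [phi'] (Some eta) /\ derivable [eta] (Some phi') /\ derivable S' (Some theta)) ->
  (derivable S None -> derivable S' None) ->
  DConc phi' S' D.
Proof.
  intros [(eta & theta & HD & H1 & H2 & H3)|H] F1 F2.
  - left. exists eta, theta. split; [exact HD|]. apply F1; auto.
  - right. auto.
Qed.

Definition CutP s k h := forall c n m G G' D, size c <= k -> n + m <= h -> size c <= s ->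
  Bnd s G -> Bnd s G' -> BndO s D -> SC n G (Some c) -> SC m (c :: G') D -> derivable (G ++ G') D.

Lemma Bnd_Lt s l : Bnd s l -> Lt (S s) l.
Proof. intros H x Hx. apply H in Hx. lia. Qed.

Lemma cut_all : forall s k h, CutP s k h.
Proof.
  intro s; induction s as [s IHs] using (well_founded_ind lt_wf).
  assert (HS : forall c G G' D, size c < s -> Lt s G -> Lt s G' -> (forall x, D = Some x -> size x < s) ->
            derivable G (Some c) -> derivable (c :: G') D -> derivable (G ++ G') D).
  { intros c G G' D Hc HG HG' HD [n1 H1] [m1 H2].
    apply (IHs (s - 1) ltac:(lia) (size c) (n1 + m1) c n1 m1); auto; try lia;
      intros x Hx; [apply HG in Hx| apply HG' in Hx| apply HD in Hx]; lia. }
  assert (Htr : forall x y z, size x < s -> size y < s -> size z < s ->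
            derivable [x] (Some y) -> derivable [y] (Some z) -> derivable [x] (Some z)).
  { intros x y z Hx Hy Hz H1 H2. apply (HS y [x] [] (Some z)); auto.
    - apply Lt_cons; [exact Hx| apply Lt_nil].
    - apply Lt_nil.
    - intros w Hw; injection Hw as <-; exact Hz. }
  intro k; induction k as [k IHk] using (well_founded_ind lt_wf).
  intro h; induction h as [h IHh] using (well_founded_ind lt_wf).
  intros c n m G G' D Hck Hh Hcs HG HG' HD L R.
  remember (Some c) as Dc eqn:HDc. revert Hh HG HDc.
  destruct L as [n Gx Gm p HP | n Gx Gm Dx HP | n Gx Gm a b Dx HP P1 | n Gx a b P1 P2 | n Gx Gm a b Dx HP P1 P2 | n Gx a b P1 | n Gx a b P1 | n Gx a b P1 | n Gx Gm a b Dx HP P1 P2 | n Gx Gm l phi psi HP C1 C2 P1 | n Gx Gm l k0 phi psi eta theta HP C1 C2 C3 C4 E1 E2 P1 | n Gx Gm l k0 phi psi Dx HP C1 C2 C3 C4 P1];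
    intros Hh HG HDc.
  -
    injection HDc as <-. exists m. eapply SC_incl; [exact R|].
    intros y [<-|Hy]; apply in_or_app; [left| right; exact Hy].
    apply Permutation_in with (Var p :: Gm); [symmetry; exact HP| left; reflexivity].
  -
    apply d_bot. apply in_or_app. left. apply Permutation_in with (Bot :: Gm); [symmetry; exact HP| left; reflexivity].
  -
    subst Dx. destruct (Bnd_inv _ _ _ _ HG HP) as [Hs Hr]. simpl in Hs.
    assert (Hd : derivable ((a :: b :: Gm) ++ G') D).
    { apply (IHh (n + m) ltac:(lia) c n m); auto. apply Bnd_cons; [lia|]. apply Bnd_cons; [lia|exact Hr]. }
    eapply d_andL with (Gm := Gm ++ G') (a := a) (b := b); [rewrite HP; psolve| eapply der_perm; [exact Hd| psolve]].
  -
    injection HDc as <-. simpl in Hck, Hcs.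
    apply (right_gen s Gx (And a b) m (And a b :: G') D R G' eq_refl); [intros ? ?; discriminate| discriminate| simpl; lia| exact HG'| exact HD| |].
    + intros m' G'' D' Hm' HG'' HD' R'. apply (IHh (S n + m') ltac:(lia) (And a b) (S n) m' Gx G'' D'); [simpl; lia| lia| simpl; lia| exact HG| exact HG''| exact HD'| apply SC_andR; auto| exact R'].
    + intro Hpr; destruct Hpr as [a' b' Heq Hd|? ? Heq|? ? Heq|? ? ? ? ? ? Heq|? ? ? ? ? ? ? Heq|? ? ? ? ? ? ? Heq|? ? ? ? ? Heq]; try discriminate Heq.
      injection Heq as <- <-. destruct Hd as [m1 R1].
      assert (Hd1 : derivable (Gx ++ b :: G') D).
      { apply (IHk (size a) ltac:(lia) (n + m1) a n m1 Gx (b :: G') D); auto; try lia. apply Bnd_cons; [lia|exact HG']. }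
      destruct Hd1 as [m2 R2].
      assert (Hd2 : derivable (Gx ++ Gx ++ G') D).
      { apply (IHk (size b) ltac:(lia) (n + m2) b n m2 Gx (Gx ++ G') D); auto; try lia.
        - apply Bnd_app; assumption.
        - eapply SC_perm; [exact R2| psolve]. }
      eapply der_incl; [exact Hd2|]. intros y Hy. rewrite !in_app_iff in *. tauto.
  -
    subst Dx. destruct (Bnd_inv _ _ _ _ HG HP) as [Hs Hr]. simpl in Hs.
    assert (Hd1 : derivable ((a :: Gm) ++ G') D).
    { apply (IHh (n + m) ltac:(lia) c n m); auto. apply Bnd_cons; [lia|exact Hr]. }
    assert (Hd2 : derivable ((b :: Gm) ++ G') D).
    { apply (IHh (n + m) ltac:(lia) c n m); auto. apply Bnd_cons; [lia|exact Hr]. }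
    eapply d_orL with (Gm := Gm ++ G') (a := a) (b := b); [rewrite HP; psolve| eapply der_perm; [exact Hd1| psolve]| eapply der_perm; [exact Hd2| psolve]].
  -
    injection HDc as <-. simpl in Hck, Hcs.
    apply (right_gen s Gx (Or a b) m (Or a b :: G') D R G' eq_refl); [intros ? ?; discriminate| discriminate| simpl; lia| exact HG'| exact HD| |].
    + intros m' G'' D' Hm' HG'' HD' R'. apply (IHh (S n + m') ltac:(lia) (Or a b) (S n) m' Gx G'' D'); [simpl; lia| lia| simpl; lia| exact HG| exact HG''| exact HD'| apply SC_orR1; auto| exact R'].
    + intro Hpr; destruct Hpr as [? ? Heq|a' b' Heq Hd1 Hd2|? ? Heq|? ? ? ? ? ? Heq|? ? ? ? ? ? ? Heq|? ? ? ? ? ? ? Heq|? ? ? ? ? Heq]; try discriminate Heq.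
      injection Heq as <- <-. destruct Hd1 as [m1 R1].
      apply (IHk (size a) ltac:(lia) (n + m1) a n m1 Gx G' D); auto; lia.
  -
    injection HDc as <-. simpl in Hck, Hcs.
    apply (right_gen s Gx (Or a b) m (Or a b :: G') D R G' eq_refl); [intros ? ?; discriminate| discriminate| simpl; lia| exact HG'| exact HD| |].
    + intros m' G'' D' Hm' HG'' HD' R'. apply (IHh (S n + m') ltac:(lia) (Or a b) (S n) m' Gx G'' D'); [simpl; lia| lia| simpl; lia| exact HG| exact HG''| exact HD'| apply SC_orR2; auto| exact R'].
    + intro Hpr; destruct Hpr as [? ? Heq|a' b' Heq Hd1 Hd2|? ? Heq|? ? ? ? ? ? Heq|? ? ? ? ? ? ? Heq|? ? ? ? ? ? ? Heq|? ? ? ? ? Heq]; try discriminate Heq.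
      injection Heq as <- <-. destruct Hd2 as [m1 R1].
      apply (IHk (size b) ltac:(lia) (n + m1) b n m1 Gx G' D); auto; lia.
  -
    injection HDc as <-. simpl in Hck, Hcs.
    apply (right_gen s Gx (Imp a b) m (Imp a b :: G') D R G' eq_refl); [intros ? ?; discriminate| discriminate| simpl; lia| exact HG'| exact HD| |].
    + intros m' G'' D' Hm' HG'' HD' R'. apply (IHh (S n + m') ltac:(lia) (Imp a b) (S n) m' Gx G'' D'); [simpl; lia| lia| simpl; lia| exact HG| exact HG''| exact HD'| apply SC_impR; auto| exact R'].
    + intro Hpr; destruct Hpr as [? ? Heq|? ? Heq|a' b' Heq Hd1 Hd2|? ? ? ? ? ? Heq|? ? ? ? ? ? ? Heq|? ? ? ? ? ? ? Heq|? ? ? ? ? Heq]; try discriminate Heq.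
      injection Heq as <- <-. destruct Hd1 as [m1 R1]. destruct Hd2 as [m2 R2].
      assert (Hd3 : derivable ((Gx ++ G') ++ Gx) (Some b)).
      { apply (IHk (size a) ltac:(lia) (m1 + n) a m1 n (Gx ++ G') Gx (Some b)); auto; try lia.
        - apply Bnd_app; assumption.
        - apply BndO_some; lia. }
      destruct Hd3 as [m3 R3].
      assert (Hd4 : derivable (((Gx ++ G') ++ Gx) ++ G') D).
      { apply (IHk (size b) ltac:(lia) (m3 + m2) b m3 m2 ((Gx ++ G') ++ Gx) G' D); auto; try lia.
        repeat apply Bnd_app; assumption. }
      eapply der_incl; [exact Hd4|]. intros y Hy. rewrite !in_app_iff in *. tauto.
  -
    subst Dx. destruct (Bnd_inv _ _ _ _ HG HP) as [Hs Hr]. simpl in Hs.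
    assert (Hd2 : derivable ((b :: Gm) ++ G') D).
    { apply (IHh (n + m) ltac:(lia) c n m); auto. apply Bnd_cons; [lia|exact Hr]. }
    eapply d_impL with (Gm := Gm ++ G') (a := a) (b := b); [rewrite HP; psolve| | eapply der_perm; [exact Hd2| psolve]].
    exists n. eapply SC_incl; [exact P1|]. intros y Hy. simpl in Hy |- *. rewrite in_app_iff. tauto.
  -
    injection HDc as <-. simpl in Hck, Hcs.
    pose proof (Bnd_part_box _ _ _ _ HG HP) as HBl.
    apply (right_gen s Gx (Box phi psi) m (Box phi psi :: G') D R G' eq_refl); [intros ? ?; discriminate| discriminate| simpl; lia| exact HG'| exact HD| |].
    + intros m' G'' D' Hm' HG'' HD' R'. apply (IHh (S n + m') ltac:(lia) (Box phi psi) (S n) m' Gx G'' D'); [simpl; lia| lia| simpl; lia| exact HG| exact HG''| exact HD'| eapply SC_box; eauto | exact R'].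
    + intro Hpr; destruct Hpr as [? ? Heq|? ? Heq|? ? Heq|x y Gm' lr phi' psi' Heq HP' HD' HE Hd|x y Gm' lr k' phi' psi' Heq HP' HE HEk HDC|? ? ? ? ? ? ? Heq|? ? ? ? ? Heq]; try discriminate Heq.
      *
        injection Heq as <- <-. subst D.
        pose proof (BndO_inv _ _ HD) as Hs'. simpl in Hs'.
        pose proof (Bnd_part_box _ _ _ _ HG' HP') as HBl'.
        eapply d_box with (Gm := Gm ++ Gm') (l := l ++ lr); [rewrite HP, HP', boxes_app; psolve| |].
        -- apply EqD_app; [|eapply EqD_cons; exact HE].
           intros rs Hrs. destruct (HE (phi, psi) (or_introl eq_refl)) as [F1 F2]. simpl in F1, F2.
           destruct (Bnd_boxes _ _ HBl rs Hrs) as [Hr1 Hr2].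
           split; [eapply (Htr phi' phi (fst rs))| eapply (Htr (fst rs) phi phi')]; try lia; auto.
           ++ exists n. apply C1. exact Hrs.
           ++ exists n. apply C2. exact Hrs.
        -- rewrite map_app. apply (HS psi (map snd l) (map snd lr) (Some psi')); [lia| apply Lt_snd_boxes; exact HBl| apply Lt_snd_boxes; exact HBl'| | exists n; exact P1| exact Hd].
           intros w Hw; injection Hw as <-; lia.
      *
        injection Heq as <- <-.
        destruct (Bnd_part_dia _ _ _ _ _ _ _ HG' HP') as (HBl' & HBk' & Hsd). simpl in Hsd.
        eapply d_dia with (Gm := Gm ++ Gm') (l := l ++ lr) (k := k') (phi := phi') (psi := psi'); [rewrite HP, HP', boxes_app; psolve| | exact HEk| ].
        -- apply EqD_app; [|eapply EqD_cons; exact HE].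
           intros rs Hrs. destruct (HE (phi, psi) (or_introl eq_refl)) as [F1 F2]. simpl in F1, F2.
           destruct (Bnd_boxes _ _ HBl rs Hrs) as [Hr1 Hr2].
           split; [eapply (Htr phi' phi (fst rs))| eapply (Htr (fst rs) phi phi')]; try lia; auto.
           ++ exists n. apply C1. exact Hrs.
           ++ exists n. apply C2. exact Hrs.
        -- eapply DConc_mod; [exact HDC| |].
           ++ intros eta theta -> H1 H2 H3. split; [exact H1|]. split; [exact H2|].
              pose proof (BndO_inv _ _ HD) as Hs'. simpl in Hs'.
              rewrite map_app, <- app_assoc.
              apply (HS psi (map snd l) (map snd lr ++ map snd k' ++ [psi']) (Some theta)); [lia| apply Lt_snd_boxes; exact HBl| | | exists n; exact P1| exact H3].
              ** apply Lt_app; [apply Lt_snd_boxes; exact HBl'|]. apply Lt_app; [apply Lt_snd_dias; exact HBk'|].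
                 apply Lt_cons; [lia| apply Lt_nil].
              ** intros w Hw; injection Hw as <-; lia.
           ++ intros H3. rewrite map_app, <- app_assoc.
              apply (HS psi (map snd l) (map snd lr ++ map snd k' ++ [psi']) None); [lia| apply Lt_snd_boxes; exact HBl| | | exists n; exact P1| exact H3].
              ** apply Lt_app; [apply Lt_snd_boxes; exact HBl'|]. apply Lt_app; [apply Lt_snd_dias; exact HBk'|].
                 apply Lt_cons; [lia| apply Lt_nil].
              ** intros w Hw; discriminate.
  -
    injection HDc as <-. simpl in Hck, Hcs.
    destruct (Bnd_part_dia _ _ _ _ _ _ _ HG HP) as (HBl & HBk & Hsd). simpl in Hsd.
    assert (HL : SC (S n) Gx (Some (Dia eta theta))) by (eapply SC_dia_cem; eauto).
    apply (right_gen s Gx (Dia eta theta) m (Dia eta theta :: G') D R G' eq_refl); [intros ? ?; discriminate| discriminate| simpl; lia| exact HG'| exact HD| |].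
    + intros m' G'' D' Hm' HG'' HD' R'. apply (IHh (S n + m') ltac:(lia) (Dia eta theta) (S n) m' Gx G'' D'); [simpl; lia| lia| simpl; lia| exact HG| exact HG''| exact HD'| exact HL | exact R'].
    + assert (HE1 : derivable [phi] (Some eta)) by (exists n; exact E1).
      assert (HE2 : derivable [eta] (Some phi)) by (exists n; exact E2).
      assert (HC12 : EqD phi l) by (intros rs Hrs; split; exists n; [apply C1|apply C2]; exact Hrs).
      assert (HC34 : EqD phi k0) by (intros rs Hrs; split; exists n; [apply C3|apply C4]; exact Hrs).
      assert (HP1 : derivable (map snd l ++ map snd k0 ++ [psi]) (Some theta)) by (exists n; exact P1).
      assert (HLt : Lt s (map snd l ++ map snd k0 ++ [psi])).
      { apply Lt_app; [apply Lt_snd_boxes; exact HBl|]. apply Lt_app; [apply Lt_snd_dias; exact HBk|].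
        apply Lt_cons; [lia| apply Lt_nil]. }
      intro Hpr; destruct Hpr as [? ? Heq|? ? Heq|? ? Heq|? ? ? ? ? ? Heq|? ? ? ? ? ? ? Heq|x y Gm' l' kr phi' psi' Heq HP' HEl HEk HDC|Gm' l' k' phi' psi' Heq HP' HEl HEk HDC]; try discriminate Heq.
      *
        injection Heq as <- <-.
        destruct (Bnd_part_dia _ _ _ _ _ _ _ HG' HP') as (HBl' & HBk' & Hsd'). simpl in Hsd'.
        destruct (HEk (eta, theta) (or_introl eq_refl)) as [F1 F2]. simpl in F1, F2.
        assert (Hpp1 : derivable [phi] (Some phi')) by (apply (Htr phi eta phi'); auto; lia).
        assert (Hpp2 : derivable [phi'] (Some phi)) by (apply (Htr phi' eta phi); auto; lia).
        assert (Hsw : forall X, (forall rs, In rs X -> size (fst rs) < s) -> EqD phi' X -> EqD phi X).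
        { intros X HX HEX rs Hrs. destruct (HEX rs Hrs) as [G1 G2]. pose proof (HX rs Hrs).
          split; [apply (Htr phi phi' (fst rs))| apply (Htr (fst rs) phi' phi)]; auto; lia. }
        eapply d_dia with (Gm := Gm ++ Gm') (l := l ++ l') (k := k0 ++ kr ++ [(phi', psi')]) (phi := phi) (psi := psi).
        -- rewrite HP, HP', boxes_app, !dias_app. change (dias [(phi', psi')]) with [Dia phi' psi']. psolve.
        -- apply EqD_app; [exact HC12|]. apply Hsw; [|exact HEl]. intros rs Hrs. apply (Bnd_boxes _ _ HBl' rs Hrs).
        -- apply EqD_app; [exact HC34|]. apply EqD_app.
           ++ apply Hsw; [|eapply EqD_cons; exact HEk]. intros rs Hrs. apply (Bnd_dias _ _ HBk' rs Hrs).
           ++ intros rs [<-|[]]. simpl. auto.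
        -- eapply DConc_perm; [eapply DConc_mod with (S' := (map snd l ++ map snd k0 ++ [psi]) ++ (map snd l' ++ map snd kr ++ [psi'])); [exact HDC| |]|].
           ++ intros eta' theta' -> H1 H2 H3. pose proof (BndO_inv _ _ HD) as Hs'. simpl in Hs'.
              split; [apply (Htr phi phi' eta'); auto; lia|]. split; [apply (Htr eta' phi' phi); auto; lia|].
              apply (HS theta); auto; [lia| | intros w Hw; injection Hw as <-; lia].
              apply Lt_app; [apply Lt_snd_boxes; exact HBl'|]. apply Lt_app; [apply Lt_snd_dias; exact HBk'|].
              apply Lt_cons; [lia| apply Lt_nil].
           ++ intros H3. apply (HS theta); auto; [lia| | intros w Hw; discriminate].
              apply Lt_app; [apply Lt_snd_boxes; exact HBl'|]. apply Lt_app; [apply Lt_snd_dias; exact HBk'|].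
              apply Lt_cons; [lia| apply Lt_nil].
           ++ rewrite !map_app. simpl. psolve.
      *
        injection Heq as <- <-.
        destruct (Bnd_part_dia2 _ _ _ _ _ HG' HP') as (HBl' & HBk').
        assert (Hsw : forall X, (forall rs, In rs X -> size (fst rs) < s) -> EqD eta X -> EqD phi X).
        { intros X HX HEX rs Hrs. destruct (HEX rs Hrs) as [G1 G2]. pose proof (HX rs Hrs).
          split; [apply (Htr phi eta (fst rs))| apply (Htr (fst rs) eta phi)]; auto; lia. }
        eapply d_dia with (Gm := Gm ++ Gm') (l := l ++ l') (k := k0 ++ k') (phi := phi) (psi := psi).
        -- rewrite HP, HP', boxes_app, !dias_app. psolve.
        -- apply EqD_app; [exact HC12|]. apply Hsw; [|exact HEl]. intros rs Hrs. apply (Bnd_boxes _ _ HBl' rs Hrs).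
        -- apply EqD_app; [exact HC34|]. apply Hsw; [|exact HEk]. intros rs Hrs. apply (Bnd_dias _ _ HBk' rs Hrs).
        -- eapply DConc_perm; [eapply DConc_mod with (S' := (map snd l ++ map snd k0 ++ [psi]) ++ (map snd l' ++ map snd k')); [exact HDC| |]|].
           ++ intros eta' theta' -> H1 H2 H3. pose proof (BndO_inv _ _ HD) as Hs'. simpl in Hs'.
              split; [apply (Htr phi eta eta'); auto; lia|]. split; [apply (Htr eta' eta phi); auto; lia|].
              apply (HS theta); auto; [lia| | intros w Hw; injection Hw as <-; lia].
              apply Lt_app; [apply Lt_snd_boxes; exact HBl'| apply Lt_snd_dias; exact HBk'].
           ++ intros H3. apply (HS theta); auto; [lia| | intros w Hw; discriminate].
              apply Lt_app; [apply Lt_snd_boxes; exact HBl'| apply Lt_snd_dias; exact HBk'].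
           ++ rewrite !map_app. psolve.
  -
    exists (S n). eapply SC_boxdia_cem with (Gm := Gm ++ G') (l := l) (k := k0) (phi := phi) (psi := psi);
      [rewrite HP; psolve| assumption ..].
Qed.

Fixpoint msum (l : list form) : nat := match l with [] => 0 | x :: l => size x + msum l end.
Lemma msum_in x l : In x l -> size x <= msum l.
Proof. induction l as [|y l IH]; simpl; [intros []|intros [->|H]; [lia| specialize (IH H); lia]]. Qed.
Definition osize (D : option form) := match D with None => 0 | Some x => size x end.

Lemma cut_adm G G' D c : derivable G (Some c) -> derivable (c :: G') D -> derivable (G ++ G') D.
Proof.
  intros [n H1] [m H2].
  set (s := size c + msum G + msum G' + osize D).
  apply (cut_all s (size c) (n + m) c n m G G' D); auto; unfold s; try lia.
  - intros x Hx. apply msum_in in Hx. lia.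
  - intros x Hx. apply msum_in in Hx. lia.
  - intros x Hx. subst D. simpl. lia.
Qed.

Lemma ident A : forall G, derivable (A :: G) (Some A).
Proof.
  induction A as [p| |a IHa b IHb|a IHa b IHb|a IHa b IHb|a IHa b IHb|a IHa b IHb]; intro G.
  - apply d_init. left. reflexivity.
  - apply d_bot. left. reflexivity.
  - eapply d_andL with (Gm := G) (a := a) (b := b); [reflexivity|]. apply d_andR; [apply IHa|].
    eapply der_perm; [apply (IHb (a :: G))| psolve].
  - eapply d_orL with (Gm := G) (a := a) (b := b); [reflexivity| apply d_orR1, IHa| apply d_orR2, IHb].
  - apply d_impR. eapply d_impL with (Gm := a :: G) (a := a) (b := b); [psolve| |apply IHb].
    eapply der_perm; [apply (IHa (Imp a b :: G))| psolve].
  - eapply d_box with (Gm := G) (l := [(a, b)]); [unfold boxes; simpl; psolve| |simpl; apply IHb].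
    intros rs [<-|[]]. simpl. split; apply IHa.
  - eapply d_dia with (Gm := G) (l := []) (k := []) (phi := a) (psi := b); [unfold boxes, dias; simpl; psolve| intros ? []| intros ? []|].
    left. exists a, b. split; [reflexivity|]. split; [apply IHa|]. split; [apply IHa|]. apply IHb.
Qed.

Lemma d_id A G : In A G -> derivable G (Some A).
Proof. intro H. destruct (in_perm _ _ H) as [G0 HG0]. eapply der_perm; [apply ident| symmetry; exact HG0]. Qed.

Lemma d_andL_in G a b D : In (And a b) G -> derivable (a :: b :: G) D -> derivable G D.
Proof.
  intros Hin H. apply der_incl with (And a b :: G); [|intros y [<-|Hy]; auto].
  eapply d_andL with (Gm := G); [reflexivity| exact H].
Qed.
Lemma d_orL_in G a b D : In (Or a b) G -> derivable (a :: G) D -> derivable (b :: G) D -> derivable G D.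
Proof.
  intros Hin H1 H2. apply der_incl with (Or a b :: G); [|intros y [<-|Hy]; auto].
  eapply d_orL with (Gm := G); [reflexivity| exact H1| exact H2].
Qed.
Lemma d_impL_in G a b D : In (Imp a b) G -> derivable G (Some a) -> derivable (b :: G) D -> derivable G D.
Proof.
  intros Hin H1 H2. apply der_incl with (Imp a b :: G); [|intros y [<-|Hy]; auto].
  eapply d_impL with (Gm := G); [reflexivity| |exact H2]. eapply der_incl; [exact H1| intros y Hy; right; exact Hy].
Qed.

Lemma d_imp_inv a b : derivable [] (Some (Imp a b)) -> derivable [a] (Some b).
Proof.
  intro H. apply (cut_adm [] [a] (Some b) (Imp a b) H).
  apply d_impL_in with a b; [left; reflexivity| apply d_id; right; left; reflexivity| apply d_id; left; reflexivity].
Qed.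
Lemma d_and_inv a b : derivable [] (Some (And a b)) -> derivable [] (Some a) /\ derivable [] (Some b).
Proof.
  intro H. split; apply (cut_adm [] [] _ (And a b) H); apply d_andL_in with a b; try (left; reflexivity);
  apply d_id; simpl; auto.
Qed.
Lemma d_iff_inv a b : derivable [] (Some (Iff a b)) -> derivable [a] (Some b) /\ derivable [b] (Some a).
Proof. intro H. apply d_and_inv in H as [H1 H2]. split; apply d_imp_inv; assumption. Qed.
Lemma d_mp a b : derivable [] (Some (Imp a b)) -> derivable [] (Some a) -> derivable [] (Some b).
Proof. intros H1 H2. apply (cut_adm [] [] _ a H2). apply d_imp_inv. exact H1. Qed.

Lemma EqD_one phi a : derivable [phi] (Some a) -> derivable [a] (Some phi) -> EqD phi [(a, phi)] -> True.
Proof. auto. Qed.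

Lemma EqD_single phi a b : derivable [phi] (Some a) -> derivable [a] (Some phi) -> EqD phi [(a, b)].
Proof. intros H1 H2 rs [<-|[]]. simpl. auto. Qed.

Ltac inl := simpl; tauto.

Lemma completeness A : ConstCKCEM A -> derivable [] (Some A).
Proof.
  induction 1.
  - apply d_impR, d_impR. apply d_id. inl.
  - apply d_impR, d_impR, d_impR.
    apply d_impL_in with a (Imp b c); [inl| apply d_id; inl|].
    apply d_impL_in with b c; [inl| |apply d_id; inl].
    apply d_impL_in with a b; [inl| apply d_id; inl| apply d_id; inl].
  - apply d_impR. apply d_andL_in with a b; [inl| apply d_id; inl].
  - apply d_impR. apply d_andL_in with a b; [inl| apply d_id; inl].
  - apply d_impR, d_impR. apply d_andR; apply d_id; inl.
  - apply d_impR. apply d_orR1. apply d_id; inl.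
  - apply d_impR. apply d_orR2. apply d_id; inl.
  - apply d_impR, d_impR, d_impR. apply d_orL_in with a b; [inl| |].
    + apply d_impL_in with a c; [inl| apply d_id; inl| apply d_id; inl].
    + apply d_impL_in with b c; [inl| apply d_id; inl| apply d_id; inl].
  - apply d_impR. apply d_bot. inl.
  - eapply d_mp; eassumption.
  - apply d_impR. apply d_andR.
    + eapply d_box with (Gm := []) (l := [(a, And b c)]); [unfold boxes; simpl; psolve| apply EqD_single; apply ident|].
      simpl. apply d_andL_in with b c; [inl| apply d_id; inl].
    + eapply d_box with (Gm := []) (l := [(a, And b c)]); [unfold boxes; simpl; psolve| apply EqD_single; apply ident|].
      simpl. apply d_andL_in with b c; [inl| apply d_id; inl].
  - apply d_impR. apply d_andL_in with (Box a b) (Box a c); [inl|].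
    eapply d_box with (Gm := [And (Box a b) (Box a c)]) (l := [(a, b); (a, c)]); [unfold boxes; simpl; psolve| |].
    + intros rs [<-|[<-|[]]]; simpl; split; apply ident.
    + simpl. apply d_andR; apply d_id; inl.
  - eapply d_box with (Gm := []) (l := []); [unfold boxes; simpl; psolve| intros ? []|].
    simpl. apply d_impR. apply d_bot. inl.
  - apply d_impR. eapply d_dia with (Gm := []) (l := []) (k := []) (phi := a) (psi := Bot); [unfold boxes, dias; simpl; psolve| intros ? []| intros ? []|].
    right. apply d_bot. inl.
  - apply d_impR, d_impR.
    eapply d_dia with (Gm := []) (l := [(a, Imp b c)]) (k := []) (phi := a) (psi := b); [unfold boxes, dias; simpl; psolve| apply EqD_single; apply ident| intros ? []|].
    left. exists a, c. split; [reflexivity|]. split; [apply ident|]. split; [apply ident|].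
    simpl. apply d_impL_in with b c; [inl| apply d_id; inl| apply d_id; inl].
  - apply d_iff_inv in IHConstCKCEM as [H1 H2]. apply d_andR; apply d_impR.
    + eapply d_box with (Gm := []) (l := [(a, b)]); [unfold boxes; simpl; psolve| apply EqD_single; assumption| simpl; apply ident].
    + eapply d_box with (Gm := []) (l := [(r, b)]); [unfold boxes; simpl; psolve| apply EqD_single; assumption| simpl; apply ident].
  - apply d_iff_inv in IHConstCKCEM as [H1 H2]. apply d_andR; apply d_impR.
    + eapply d_box with (Gm := []) (l := [(a, b)]); [unfold boxes; simpl; psolve| apply EqD_single; apply ident| simpl; assumption].
    + eapply d_box with (Gm := []) (l := [(a, c)]); [unfold boxes; simpl; psolve| apply EqD_single; apply ident| simpl; assumption].
  - apply d_iff_inv in IHConstCKCEM as [H1 H2]. apply d_andR; apply d_impR.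
    + eapply d_dia with (Gm := []) (l := []) (k := []) (phi := a) (psi := b); [unfold boxes, dias; simpl; psolve| intros ? []| intros ? []|].
      left. exists r, b. split; [reflexivity|]. split; [assumption|]. split; [assumption|]. simpl. apply ident.
    + eapply d_dia with (Gm := []) (l := []) (k := []) (phi := r) (psi := b); [unfold boxes, dias; simpl; psolve| intros ? []| intros ? []|].
      left. exists a, b. split; [reflexivity|]. split; [assumption|]. split; [assumption|]. simpl. apply ident.
  - apply d_iff_inv in IHConstCKCEM as [H1 H2]. apply d_andR; apply d_impR.
    + eapply d_dia with (Gm := []) (l := []) (k := []) (phi := a) (psi := b); [unfold boxes, dias; simpl; psolve| intros ? []| intros ? []|].
      left. exists a, c. split; [reflexivity|]. split; [apply ident|]. split; [apply ident|]. simpl. assumption.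
    + eapply d_dia with (Gm := []) (l := []) (k := []) (phi := a) (psi := c); [unfold boxes, dias; simpl; psolve| intros ? []| intros ? []|].
      left. exists a, b. split; [reflexivity|]. split; [apply ident|]. split; [apply ident|]. simpl. assumption.
  - apply d_impR. apply d_andL_in with (Dia a b) (Dia a c); [inl|].
    eapply d_dia with (Gm := [And (Dia a b) (Dia a c)]) (l := []) (k := [(a, b)]) (phi := a) (psi := c); [unfold boxes, dias; simpl; psolve| intros ? []| apply EqD_single; apply ident|].
    left. exists a, (And b c). split; [reflexivity|]. split; [apply ident|]. split; [apply ident|].
    simpl. apply d_andR; apply d_id; inl.
Qed.

Definition Pr (Gam : list form) (A : form) : Prop :=
  ConstCKCEM (fold_left (fun acc x => Imp x acc) Gam A).

Lemma Pr_cons x Gam A : Pr (x :: Gam) A = Pr Gam (Imp x A).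
Proof. reflexivity. Qed.

Lemma thm_id a : ConstCKCEM (Imp a a).
Proof. apply MP with (Imp a (Imp a a)); [apply MP with (Imp a (Imp (Imp a a) a)); [apply A2| apply A1]| apply A1]. Qed.

Lemma pr_lift A : ConstCKCEM A -> forall Gam, Pr Gam A.
Proof.
  intros H Gam. revert A H. induction Gam as [|x Gam IH]; intros A H; [exact H|].
  rewrite Pr_cons. apply IH. apply MP with A; [apply A1| exact H].
Qed.

Lemma pr_mp Gam : forall A B, Pr Gam (Imp A B) -> Pr Gam A -> Pr Gam B.
Proof.
  induction Gam as [|x Gam IH]; intros A B H1 H2; [eapply MP; eassumption|].
  rewrite Pr_cons in *. apply IH with (Imp x A); [|exact H2].
  apply IH with (Imp x (Imp A B)); [apply pr_lift, A2| exact H1].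
Qed.

Lemma pr_ax2 Gam A B : ConstCKCEM (Imp A B) -> Pr Gam A -> Pr Gam B.
Proof. intros H1 H2. eapply pr_mp; [apply pr_lift; exact H1| exact H2]. Qed.
Lemma pr_ax3 Gam A B C : ConstCKCEM (Imp A (Imp B C)) -> Pr Gam A -> Pr Gam B -> Pr Gam C.
Proof. intros H1 H2 H3. eapply pr_mp; [eapply pr_mp; [apply pr_lift; exact H1| exact H2]| exact H3]. Qed.

Lemma pr_weak Gam x A : Pr Gam A -> Pr (x :: Gam) A.
Proof. intro H. rewrite Pr_cons. eapply pr_ax2; [apply A1| exact H]. Qed.

Lemma pr_in Gam A : In A Gam -> Pr Gam A.
Proof.
  induction Gam as [|x Gam IH]; [intros []|]; intros [->|H].
  - rewrite Pr_cons. apply pr_lift, thm_id.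
  - apply pr_weak. auto.
Qed.

Lemma pr_subst Gam : forall A Del, Pr Gam A -> (forall x, In x Gam -> Pr Del x) -> Pr Del A.
Proof.
  induction Gam as [|x Gam IH]; intros A Del H HD; [apply pr_lift; exact H|].
  rewrite Pr_cons in H. apply pr_mp with x; [|apply HD; left; reflexivity].
  apply IH; [exact H| intros y Hy; apply HD; right; exact Hy].
Qed.

Lemma pr_incl Gam Del A : Pr Gam A -> incl Gam Del -> Pr Del A.
Proof. intros H Hi. apply pr_subst with Gam; [exact H| intros x Hx; apply pr_in, Hi, Hx]. Qed.

Lemma thm_of_pr a b : Pr [a] b -> ConstCKCEM (Imp a b).
Proof. auto. Qed.

Lemma thm_iff a b : ConstCKCEM (Imp a b) -> ConstCKCEM (Imp b a) -> ConstCKCEM (Iff a b).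
Proof. intros H1 H2. apply MP with (Imp b a); [apply MP with (Imp a b); [apply A5| exact H1]| exact H2]. Qed.
Lemma iff_l a b : ConstCKCEM (Iff a b) -> ConstCKCEM (Imp a b).
Proof. intro H. apply MP with (Iff a b); [apply A3| exact H]. Qed.
Lemma iff_r a b : ConstCKCEM (Iff a b) -> ConstCKCEM (Imp b a).
Proof. intro H. apply MP with (Iff a b); [apply A4| exact H]. Qed.

Lemma box_RA phi rho sig : ConstCKCEM (Imp phi rho) -> ConstCKCEM (Imp rho phi) -> ConstCKCEM (Imp (Box rho sig) (Box phi sig)).
Proof. intros H1 H2. apply iff_r. apply RA_box. apply thm_iff; assumption. Qed.
Lemma dia_RA phi rho sig : ConstCKCEM (Imp phi rho) -> ConstCKCEM (Imp rho phi) -> ConstCKCEM (Imp (Dia rho sig) (Dia phi sig)).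
Proof. intros H1 H2. apply iff_r. apply RA_dia. apply thm_iff; assumption. Qed.

Lemma box_mono phi A B : ConstCKCEM (Imp A B) -> ConstCKCEM (Imp (Box phi A) (Box phi B)).
Proof.
  intro H. assert (HI : ConstCKCEM (Iff A (And A B))).
  { apply thm_iff.
    - apply (thm_of_pr A (And A B)). apply pr_ax3 with A B; [apply A5| apply pr_in; left; reflexivity|].
      apply pr_ax2 with A; [exact H| apply pr_in; left; reflexivity].
    - apply A3. }
  apply (thm_of_pr (Box phi A) (Box phi B)).
  apply pr_ax2 with (And (Box phi A) (Box phi B)); [apply A4|].
  apply pr_ax2 with (Box phi (And A B)); [apply CM_box|].
  apply pr_ax2 with (Box phi A); [apply iff_l; apply RC_box; exact HI| apply pr_in; left; reflexivity].
Qed.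

Definition Cj (l : list form) : form := fold_right And Top l.
Definition DC (k : list (form * form)) (psi : form) : form := fold_right And psi (map snd k).

Lemma Cj_elim L : forall y, In y L -> Pr [Cj L] y.
Proof.
  induction L as [|x L IH]; intros y Hy; [destruct Hy|]. destruct Hy as [->|Hy].
  - apply pr_ax2 with (And y (Cj L)); [apply A3| apply pr_in; left; reflexivity].
  - apply pr_subst with [Cj L]; [apply IH; exact Hy|].
    intros z [<-|[]]. apply pr_ax2 with (And x (Cj L)); [apply A4| apply pr_in; left; reflexivity].
Qed.

Lemma DC_elim k psi : forall y, In y (map snd k ++ [psi]) -> Pr [DC k psi] y.
Proof.
  induction k as [|[a b] k IH]; intros y Hy.
  - destruct Hy as [<-|[]]. apply pr_in. left. reflexivity.
  - destruct Hy as [<-|Hy].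
    + apply pr_ax2 with (And b (DC k psi)); [apply A3| apply pr_in; left; reflexivity].
    + apply pr_subst with [DC k psi]; [apply IH; exact Hy|].
      intros z [<-|[]]. apply pr_ax2 with (And b (DC k psi)); [apply A4| apply pr_in; left; reflexivity].
Qed.

Lemma box_collect Gam phi l :
  (forall rs, In rs l -> ConstCKCEM (Imp phi (fst rs)) /\ ConstCKCEM (Imp (fst rs) phi)) ->
  (forall rs, In rs l -> In (Box (fst rs) (snd rs)) Gam) ->
  Pr Gam (Box phi (Cj (map snd l))).
Proof.
  induction l as [|[rho sig] l IH]; intros HE HI.
  - apply pr_lift. apply CN_box.
  - simpl. apply pr_ax2 with (And (Box phi sig) (Box phi (Cj (map snd l)))); [apply CC_box|].
    apply pr_ax3 with (Box phi sig) (Box phi (Cj (map snd l))); [apply A5| |].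
    + destruct (HE (rho, sig) (or_introl eq_refl)) as [H1 H2].
      apply pr_ax2 with (Box rho sig); [apply box_RA; assumption| apply pr_in; apply (HI (rho, sig)); left; reflexivity].
    + apply IH; intros rs Hrs; [apply HE| apply HI]; right; exact Hrs.
Qed.

Lemma dia_collect Gam phi psi k :
  (forall rs, In rs k -> ConstCKCEM (Imp phi (fst rs)) /\ ConstCKCEM (Imp (fst rs) phi)) ->
  (forall rs, In rs k -> In (Dia (fst rs) (snd rs)) Gam) -> Pr Gam (Dia phi psi) ->
  Pr Gam (Dia phi (DC k psi)).
Proof.
  induction k as [|[xi chi] k IH]; intros HE HI HP; [exact HP|].
  simpl. apply pr_ax2 with (And (Dia phi chi) (Dia phi (DC k psi))); [apply CEM_dia|].
  apply pr_ax3 with (Dia phi chi) (Dia phi (DC k psi)); [apply A5| |].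
  - destruct (HE (xi, chi) (or_introl eq_refl)) as [H1 H2].
    apply pr_ax2 with (Dia xi chi); [apply dia_RA; assumption| apply pr_in; apply (HI (xi, chi)); left; reflexivity].
  - apply IH; [intros rs Hrs; apply HE; right; exact Hrs| intros rs Hrs; apply HI; right; exact Hrs| exact HP].
Qed.

Lemma dia_sound Gam Gm l k phi psi theta :
  Permutation Gam (Gm ++ boxes l ++ dias k ++ [Dia phi psi]) ->
  (forall rs, In rs l -> ConstCKCEM (Imp phi (fst rs)) /\ ConstCKCEM (Imp (fst rs) phi)) ->
  (forall rs, In rs k -> ConstCKCEM (Imp phi (fst rs)) /\ ConstCKCEM (Imp (fst rs) phi)) ->
  Pr (map snd l ++ map snd k ++ [psi]) theta -> Pr Gam (Dia phi theta).
Proof.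
  intros HP Hl Hk Hm.
  assert (HinG : forall x, In x (Gm ++ boxes l ++ dias k ++ [Dia phi psi]) -> In x Gam).
  { intros x Hx. apply Permutation_in with (Gm ++ boxes l ++ dias k ++ [Dia phi psi]); [symmetry; exact HP| exact Hx]. }
  assert (H1 : Pr Gam (Box phi (Cj (map snd l)))).
  { apply box_collect; [exact Hl|]. intros rs Hrs. apply HinG. rewrite !in_app_iff. right; left.
    apply in_map_iff. exists rs. auto. }
  assert (H2 : Pr Gam (Dia phi (DC k psi))).
  { apply dia_collect; [exact Hk| |].
    - intros rs Hrs. apply HinG. rewrite !in_app_iff. right; right; left. apply in_map_iff. exists rs. auto.
    - apply pr_in. apply HinG. rewrite !in_app_iff. right; right; right. left. reflexivity. }
  assert (H3 : ConstCKCEM (Imp (Cj (map snd l)) (Imp (DC k psi) theta))).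
  { change (Pr [DC k psi; Cj (map snd l)] theta). apply pr_subst with (1 := Hm).
    intros y Hy. apply in_app_or in Hy as [Hy|Hy].
    - apply pr_weak. apply Cj_elim. exact Hy.
    - apply pr_incl with [DC k psi]; [apply DC_elim; exact Hy| intros z [<-|[]]; left; reflexivity]. }
  apply pr_mp with (Dia phi (DC k psi)); [|exact H2].
  apply pr_ax2 with (Box phi (Imp (DC k psi) theta)); [apply CK_dia|].
  apply pr_ax2 with (Box phi (Cj (map snd l))); [apply box_mono; exact H3| exact H1].
Qed.

Lemma soundness n G D : SC n G D -> Pr G (bigOr D).
Proof.
  assert (Hin : forall (G G0 : list form) (x : form), Permutation G (x :: G0) -> In x G).
  { intros G0 G1 x HP. apply Permutation_in with (x :: G1); [symmetry; exact HP| left; reflexivity]. }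
  assert (Hin2 : forall (G G0 : list form) (x y : form), Permutation G (x :: G0) -> In y G0 -> In y G).
  { intros G0 G1 x y HP Hy. apply Permutation_in with (x :: G1); [symmetry; exact HP| right; exact Hy]. }
  induction 1; simpl in *.
  - apply pr_in. eapply Hin; eauto.
  - apply pr_ax2 with Bot; [apply A9| apply pr_in; eapply Hin; eauto].
  - apply pr_subst with (1 := IHSC). intros y [<-|[<-|Hy]].
    + apply pr_ax2 with (And a b); [apply A3| apply pr_in; eapply Hin; eauto].
    + apply pr_ax2 with (And a b); [apply A4| apply pr_in; eapply Hin; eauto].
    + apply pr_in. eapply Hin2; eauto.
  - apply pr_ax3 with a b; [apply A5| assumption| assumption].
  - rewrite Pr_cons in IHSC1, IHSC2.
    apply pr_mp with (Or a b); [|apply pr_in; eapply Hin; eauto].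
    apply pr_ax3 with (Imp a (bigOr D)) (Imp b (bigOr D)); [apply A8| |];
      (eapply pr_incl; [eassumption| intros y Hy; eapply Hin2; eauto]).
  - apply pr_ax2 with a; [apply A6| assumption].
  - apply pr_ax2 with b; [apply A7| assumption].
  - rewrite Pr_cons in IHSC. exact IHSC.
  - assert (Ha : Pr G a) by (eapply pr_incl; [exact IHSC1| intros y [<-|Hy]; [eapply Hin; eauto| eapply Hin2; eauto]]).
    assert (Hb : Pr G b) by (apply pr_mp with a; [apply pr_in; eapply Hin; eauto| exact Ha]).
    apply pr_subst with (1 := IHSC2). intros y [<-|Hy]; [exact Hb| apply pr_in; eapply Hin2; eauto].
  - assert (HinG : forall x, In x (Gm ++ boxes l) -> In x G).
    { intros x Hx. apply Permutation_in with (Gm ++ boxes l); [symmetry; exact H| exact Hx]. }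
    apply pr_mp with (Box phi (Cj (map snd l))).
    + apply pr_lift. apply box_mono. change (Pr [Cj (map snd l)] psi). apply pr_subst with (1 := IHSC).
      intros y Hy. apply Cj_elim. exact Hy.
    + apply box_collect; [intros rs Hrs; split; [apply H1|apply H3]; exact Hrs|].
      intros rs Hrs. apply HinG. apply in_or_app. right. apply in_map_iff. exists rs. auto.
  - apply pr_ax2 with (Dia phi theta); [apply iff_l, RA_dia, thm_iff; assumption|].
    eapply dia_sound; [exact H| intros rs Hrs; split; [apply H1|apply H3]; exact Hrs| intros rs Hrs; split; [apply H5|apply H7]; exact Hrs| exact IHSC3].
  - apply pr_ax2 with Bot; [apply A9|]. apply pr_mp with (Dia phi Bot); [apply pr_lift, CN_dia|].
    eapply dia_sound; [exact H| intros rs Hrs; split; [apply H1|apply H3]; exact Hrs| intros rs Hrs; split; [apply H5|apply H7]; exact Hrs| exact IHSC].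
Qed.

Lemma bigAnd_elim G : G <> [] -> forall y, In y G -> Pr [bigAnd G] y.
Proof.
  induction G as [|a G IH]; intros Hne y Hy; [congruence|].
  destruct G as [|b G].
  - destruct Hy as [<-|[]]. apply pr_in. left. reflexivity.
  - change (bigAnd (a :: b :: G)) with (And a (bigAnd (b :: G))).
    destruct Hy as [<-|Hy].
    + apply pr_ax2 with (And a (bigAnd (b :: G))); [apply A3| apply pr_in; left; reflexivity].
    + apply pr_subst with [bigAnd (b :: G)]; [apply IH; [discriminate| exact Hy]|].
      intros z [<-|[]]. apply pr_ax2 with (And a (bigAnd (b :: G))); [apply A4| apply pr_in; left; reflexivity].
Qed.

Lemma bigAnd_der G : G <> [] -> derivable G (Some (bigAnd G)).
Proof.
  induction G as [|a G IH]; intro Hne; [congruence|].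
  destruct G as [|b G].
  - apply ident.
  - change (bigAnd (a :: b :: G)) with (And a (bigAnd (b :: G))).
    apply d_andR; [apply ident|]. eapply der_incl; [apply IH; discriminate| intros y Hy; right; exact Hy].
Qed.

Lemma bigOr_der G D : derivable G (Some (bigOr D)) -> derivable G D.
Proof.
  destruct D as [x|]; simpl; intro H; [exact H|].
  rewrite <- (app_nil_r G). apply (cut_adm G [] None Bot H). apply d_bot. left. reflexivity.
Qed.

Lemma wR_aux n G D : SC n G D -> D = None -> forall phi, SC n G (Some phi).
Proof.
  induction 1; intros HD phi0; try discriminate.
  - eapply SC_botL; eauto.
  - eapply SC_andL; eauto.
  - eapply SC_orL; eauto.
  - eapply SC_impL; eauto.
  - eapply SC_boxdia_cem; eauto.
Qed.

Theorem theorem13 :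
  (* w_L is height-preserving admissible *)
  (forall (n : nat) (G : list form) (D : option form) (phi : form),
      SC n G D -> SC n (G ++ [phi]) D) /\
  (* w_R is height-preserving admissible *)
  (forall (n : nat) (G : list form) (phi : form),
      SC n G None -> SC n G (Some phi)) /\
  (* contraction is height-preserving admissible *)
  (forall (n : nat) (G : list form) (D : option form) (phi : form),
      SC n (G ++ [phi; phi]) D -> SC n (G ++ [phi]) D) /\
  (* cut is admissible *)
  (forall (G G' : list form) (D : option form) (phi : form),
      derivable G (Some phi) -> derivable (G' ++ [phi]) D ->
      derivable (G ++ G') D) /\
  (* soundness and completeness w.r.t. ConstCKCEM *)
  (forall (G : list form) (D : option form),
      derivable G D <-> ConstCKCEM (iota G D)).
Proof.
  split; [|split; [|split; [|split]]].
  - intros n G D phi H. eapply SC_incl; [exact H|]. intros y Hy. apply in_or_app. left. exact Hy.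
  - intros n G phi H. eapply wR_aux; eauto.
  - intros n G D phi H. eapply SC_incl; [exact H|]. intros y Hy.
    rewrite !in_app_iff in *. simpl in *. tauto.
  - intros G G' D phi H1 H2. apply cut_adm with phi; [exact H1|]. eapply der_perm; [exact H2| psolve].
  - intros G D. split.
    + intros [n H]. apply soundness in H. destruct G as [|a G]; [exact H|].
      unfold iota. apply (pr_subst (a :: G) (bigOr D) [bigAnd (a :: G)] H).
      apply bigAnd_elim. discriminate.
    + intro H. apply completeness in H. apply bigOr_der. destruct G as [|a G]; [exact H|].
      unfold iota in H. apply d_imp_inv in H.
      rewrite <- (app_nil_r (a :: G)). apply (cut_adm (a :: G) [] _ (bigAnd (a :: G))); [apply bigAnd_der; discriminate| exact H].
Qed.
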